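(* Assume Assumption A. Let $\{\mathscr F_1,\dots,\mathscr F_{\mathfrak p},\Delta_{\mathscr F}\}$, $\mathfrak p\ge2$, be a partition of $E$ and $\beta^-_N,\beta_N$ positive sequences with $\beta^-_N/\beta_N\to0$ satisfying (H0)–(H3) with $(a_N,b_N)=(\beta^-_N,\beta_N)$; let $X_{\mathscr F}$ be the Markov chain on $P=\{1,\dots,\mathfrak p\}$ with rates $r_{\mathscr F}(x,y)$ given by (H1). Let $C$ be a communicating class of $X_{\mathscr F}$ and $\mathscr C=\bigcup_{x\in C}\mathscr F_x$. Then for all $\eta\ne\xi\in\mathscr C$ there exists $m(\eta,\xi)\in(0,\infty)$ with $\lim_{N\to\infty}\mu_N(\eta)/\mu_N(\xi)=m(\eta,\xi)$.
   Context: Setting: $E$ is a fixed finite set. For each $N\ge1$, $(\eta^N_t)$ is a continuous-time irreducible Markov chain on $E$ with jump rates $R_N(\eta,\xi)$, holding rates $\lambda_N(\eta)=\sum_{\xi\neq\eta}R_N(\eta,\xi)$ and unique invariant probability $\mu_N$; $\mathbb P_\eta,\mathbb E_\eta$ law/expectation from $\eta$. $H_A=\inf\{t>0:\eta^N_t\in A\}$, $H^+_A=\inf\{t>\tau_1:\eta^N_t\in A\}$, $\tau_1$ first jump time; $\mathrm{Cap}_N(A,B)=\sum_{\eta\in A}\mu_N(\eta)\lambda_N(\eta)\mathbb P_\eta[H_B<H^+_A]$, $\mathrm{Cap}_N(\eta,\xi)=\mathrm{Cap}_N(\{\eta\},\{\xi\})$. The trace on nonempty $F\subset E$ is $\eta^F_t=\eta^N_{S_F(t)}$,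 $S_F(t)=\sup\{s:\int_0^s\mathbf 1\{\eta^N_r\in F\}dr\le t\}$, with jump rates $R^F_N$. Ordered families: a finite family of sequences of positive reals $(a^r_N)$, $r\in\mathfrak R$, is ordered if for all $r\neq s$, $\arctan(a^r_N/a^s_N)$ converges. Assumption A: (i) for each $\eta\neq\xi$, either $R_N(\eta,\xi)=0$ for all $N$ or $>0$ for all $N$; $\mathbb B$ is the set of pairs with positive rates; (ii) for every $m\ge1$ the family $\prod_{(\eta,\xi)\in\mathbb B}R_N(\eta,\xi)^{k(\eta,\xi)}$, $k:\mathbb B\to\mathbb Z_+$, $\sum k=m$, is ordered. Conditions for a partition $\{\mathscr F_1,\dots,\mathscr F_{\mathfrak p},\Delta_{\mathscr F}\}$ (independent of $N$) and $(a_N,b_N)$, with $\mathscr F=\bigcup_x\mathscr F_x$ and $r^{\mathscr F}_N(\mathscr F_x,\mathscr F_y)=\mu_N(\mathscr F_x)^{-1}\sum_{\eta\in\mathscr F_x}\mu_N(\eta)\sum_{\xi\in\mathscr F_y}R^{\mathscr F}_N(\eta,\xi)$: (H0) for each $x$, $\eta\in\mathscr F_x$, $\lim_N\mu_N(\eta)/\mu_N(\mathscr F_x)\in(0,1]$ exists; (H1) for $x\ne y$, $r_{\mathscr F}(x,y):=\lim_Nb_Nr^{\mathscr F}_N(\mathscr F_x,\mathscr F_y)\in[0,\infty)$ exists, and $\sum_x\sum_{y\ne x}r_{\mathscr F}(x,y)>0$; (H2) for $|\mathscr F_x|\ge2$, $\eta\ne\xi\in\mathscr F_x$: $\liminf_Na_N\mathrm{Cap}_N(\eta,\xi)/\mu_N(\mathscr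 F_x)>0$; (H3) for every $t>0$, $\lim_N\max_\eta\mathbb E_\eta[\int_0^t\mathbf 1\{\eta^N_{sb_N}\in\Delta_{\mathscr F}\}ds]=0$. *)

(* Defs.v *)
From Stdlib Require Import Reals Relations ClassicalEpsilon.
From mathcomp Require Import all_boot.

Set Implicit Arguments.
Unset Strict Implicit.
Unset Printing Implicit Defensive.

Local Open Scope R_scope.

(** Total "limit" of a real sequence (its limit when it converges). *)
Definition seqlim (u : nat -> R) : R :=
  epsilon (inhabits 0) (fun l => Un_cv u l).

(** Total Riemann integral (its value when f is Riemann integrable on [a,b]). *)
Definition RInt (f : R -> R) (a b : R) : R :=
  epsilon (inhabits 0)
    (fun I => exists pr : Riemann_integrable f a b, RiemannInt pr = I).

Section Chain.
Variable E : finType.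

(** A rate function (for one fixed N): Rt η ξ is the jump rate η -> ξ
    (diagonal entries are ignored). *)

Definition holding (Rt : E -> E -> R) (eta : E) : R :=
  \big[Rplus/0]_(xi | xi != eta) Rt eta xi.

Definition jumpP (Rt : E -> E -> R) (eta xi : E) : R :=
  if eta == xi then 0 else Rt eta xi / holding Rt eta.

(** firstHitUpTo Rt S T k ζ = probability, for the jump chain started at ζ,
    that during jump steps 1..k it visits S, and that its first visit to S
    (at a step >= 1) lies in T. *)
Fixpoint firstHitUpTo (Rt : E -> E -> R) (S T : {set E}) (k : nat) (z : E) : R :=
  match k with
  | O => 0
  | k'.+1 => \big[Rplus/0]_(z' : E)
               (jumpP Rt z z' *
                (if z' \in S then (if z' \in T then 1 else 0)
                 else firstHitUpTo Rt S T k' z'))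
  end.

(** P_ζ[ the first visit (after the first jump) to S happens in T ] *)
Definition firstHit (Rt : E -> E -> R) (S T : {set E}) (z : E) : R :=
  seqlim (fun k => firstHitUpTo Rt S T k z).

(** P_η[H_B < H^+_A]  (A, B disjoint) *)
Definition hitBefore (Rt : E -> E -> R) (A B : {set E}) (eta : E) : R :=
  firstHit Rt (A :|: B) (B :\: A) eta.

Definition muS (m : E -> R) (A : {set E}) : R := \big[Rplus/0]_(eta in A) m eta.

Definition Cap (Rt : E -> E -> R) (m : E -> R) (A B : {set E}) : R :=
  \big[Rplus/0]_(eta in A) (m eta * holding Rt eta * hitBefore Rt A B eta).

Definition Cap2 (Rt : E -> E -> R) (m : E -> R) (eta xi : E) : R :=
  Cap Rt m [set eta] [set xi].

(** jump rates of the trace process on F: R^F(η,ξ) = λ(η) P_η[H^+_F = H_ξ] *)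
Definition traceRate (Rt : E -> E -> R) (F : {set E}) (eta xi : E) : R :=
  holding Rt eta * firstHit Rt F [set xi] eta.

Definition traceSetRate (Rt : E -> E -> R) (m : E -> R) (F Fx Fy : {set E}) : R :=
  / muS m Fx *
  \big[Rplus/0]_(eta in Fx) (m eta * \big[Rplus/0]_(xi in Fy) traceRate Rt F eta xi).

Definition irreducible (Rt : E -> E -> R) : Prop :=
  forall eta xi : E,
    clos_refl_trans E (fun a b => a <> b /\ 0 < Rt a b) eta xi.

Definition invariantProb (Rt : E -> E -> R) (m : E -> R) : Prop :=
  (forall eta, 0 <= m eta) /\
  \big[Rplus/0]_(eta : E) m eta = 1 /\
  (forall xi, \big[Rplus/0]_(eta | eta != xi) (m eta * Rt eta xi)
              = m xi * holding Rt xi).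

Definition generator (Rt : E -> E -> R) (eta xi : E) : R :=
  if eta == xi then - holding Rt eta else Rt eta xi.

Definition mmul (A B : E -> E -> R) (eta zeta : E) : R :=
  \big[Rplus/0]_(xi : E) (A eta xi * B xi zeta).

Fixpoint mpow (A : E -> E -> R) (k : nat) : E -> E -> R :=
  match k with
  | O => fun eta zeta => if eta == zeta then 1 else 0
  | k'.+1 => mmul A (mpow A k')
  end.

(** transition probabilities p_t(η,ζ) = P_η[η_t = ζ] = (e^{tQ})(η,ζ) *)
Definition transP (Rt : E -> E -> R) (t : R) (eta zeta : E) : R :=
  seqlim (fun n => \big[Rplus/0]_(k < n)
                      (t ^ k / INR (Factorial.fact k) * mpow (generator Rt) k eta zeta)).

(** E_η[ ∫_0^t 1{η_{s b} ∈ D} ds ] = ∫_0^t P_η[η_{s b} ∈ D] ds *)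
Definition occTime (Rt : E -> E -> R) (D : {set E}) (b t : R) (eta : E) : R :=
  RInt (fun s => \big[Rplus/0]_(zeta in D) transP Rt (s * b) eta zeta) 0 t.

Definition orderedPair (a c : nat -> R) : Prop :=
  exists l, Un_cv (fun N => atan (a N / c N)) l.

Definition monomial (Rs : nat -> E -> E -> R) (B : {set E * E}) (k : E * E -> nat)
  (N : nat) : R :=
  \big[Rmult/1]_(pr in B) (Rs N pr.1 pr.2 ^ k pr).

Definition assumptionA (Rs : nat -> E -> E -> R) (B : {set E * E}) : Prop :=
  (forall eta xi : E, eta <> xi ->
     (forall N, Rs N eta xi = 0) \/ (forall N, 0 < Rs N eta xi)) /\
  (forall eta xi : E, (eta, xi) \in B <-> (eta <> xi /\ forall N, 0 < Rs N eta xi)) /\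
  (forall m : nat, (1 <= m)%nat ->
     forall k1 k2 : E * E -> nat,
       (\sum_(pr in B) k1 pr)%N = m -> (\sum_(pr in B) k2 pr)%N = m ->
       orderedPair (monomial Rs B k1) (monomial Rs B k2)).

Definition isPartition (p : nat) (F : 'I_p -> {set E}) (D : {set E}) : Prop :=
  (forall x, F x != set0) /\
  (forall x y, x != y -> [disjoint F x & F y]) /\
  (forall x, [disjoint F x & D]) /\
  (forall eta : E, eta \in D \/ exists x, eta \in F x).

Definition unionF (p : nat) (F : 'I_p -> {set E}) : {set E} := \bigcup_(x < p) F x.

Definition H0 (mu : nat -> E -> R) (p : nat) (F : 'I_p -> {set E}) : Prop :=
  forall x (eta : E), eta \in F x ->
    exists l, 0 < l <= 1 /\ Un_cv (fun N => mu N eta / muS (mu N) (F x)) l.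

Definition H1 (Rs : nat -> E -> E -> R) (mu : nat -> E -> R) (p : nat)
  (F : 'I_p -> {set E}) (b : nat -> R) (rF : 'I_p -> 'I_p -> R) : Prop :=
  (forall x y, x != y ->
     0 <= rF x y /\
     Un_cv (fun N => b N * traceSetRate (Rs N) (mu N) (unionF F) (F x) (F y)) (rF x y)) /\
  0 < \big[Rplus/0]_(x < p) \big[Rplus/0]_(y < p | y != x) rF x y.

Definition H2 (Rs : nat -> E -> E -> R) (mu : nat -> E -> R) (p : nat)
  (F : 'I_p -> {set E}) (a : nat -> R) : Prop :=
  forall x, (2 <= #|F x|)%nat ->
    forall eta xi : E, eta \in F x -> xi \in F x -> eta != xi ->
      (* liminf_N a_N Cap_N(η,ξ)/μ_N(F_x) > 0 *)
      exists c, 0 < c /\ exists N0, forall N, (N0 <= N)%nat ->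
        c <= a N * Cap2 (Rs N) (mu N) eta xi / muS (mu N) (F x).

Definition H3 (Rs : nat -> E -> E -> R) (D : {set E}) (b : nat -> R) : Prop :=
  forall t, 0 < t ->
    Un_cv (fun N => \big[Rmax/0]_(eta : E) occTime (Rs N) D (b N) t eta) 0.

End Chain.

Definition reachP (p : nat) (r : 'I_p -> 'I_p -> R) : 'I_p -> 'I_p -> Prop :=
  clos_refl_trans 'I_p (fun x y => x <> y /\ 0 < r x y).

Definition commClass (p : nat) (r : 'I_p -> 'I_p -> R) (C : {set 'I_p}) : Prop :=
  exists x0, forall y, y \in C <-> (reachP r x0 y /\ reachP r y x0).

(* Main.v *)
Require Import Defs.
From Stdlib Require Import Reals Lra Relations ClassicalEpsilon Classical.
From mathcomp Require Import all_boot zify.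
From HB Require Import structures.
From Coquelicot Require Import Coquelicot.
Set Implicit Arguments.
Unset Strict Implicit.
Unset Printing Implicit Defensive.
Local Open Scope R_scope.


Lemma Rplus_A : associative Rplus. Proof. by move=> x y z; ring. Qed.
Lemma Rplus_C : commutative Rplus. Proof. by move=> x y; ring. Qed.
Lemma Rplus_0L : left_id 0 Rplus. Proof. by move=> x; ring. Qed.
HB.instance Definition _ := Monoid.isComLaw.Build R 0 Rplus Rplus_A Rplus_C Rplus_0L.
Lemma Rmult_A : associative Rmult. Proof. by move=> x y z; ring. Qed.
Lemma Rmult_C : commutative Rmult. Proof. by move=> x y; ring. Qed.
Lemma Rmult_1L : left_id 1 Rmult. Proof. by move=> x; ring. Qed.
HB.instance Definition _ := Monoid.isComLaw.Build R 1 Rmult Rmult_A Rmult_C Rmult_1L.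
Lemma Rmult_0L : left_zero 0 Rmult. Proof. by move=> x; ring. Qed.
Lemma Rmult_0R : right_zero 0 Rmult. Proof. by move=> x; ring. Qed.
HB.instance Definition _ := Monoid.isMulLaw.Build R 0 Rmult Rmult_0L Rmult_0R.
Lemma Rmult_DL : left_distributive Rmult Rplus. Proof. by move=> x y z; ring. Qed.
Lemma Rmult_DR : right_distributive Rmult Rplus. Proof. by move=> x y z; ring. Qed.
HB.instance Definition _ := Monoid.isAddLaw.Build R Rmult Rplus Rmult_DL Rmult_DR.

Lemma sumR_le (I : Type) (r : seq I) (P : pred I) (f g : I -> R) :
  (forall i, P i -> f i <= g i) ->
  \big[Rplus/0]_(i <- r | P i) f i <= \big[Rplus/0]_(i <- r | P i) g i.
Proof.
move=> H; apply: (big_ind2 (fun a b => a <= b)) => //; first lra.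
by move=> ? ? ? ? ? ?; lra.
Qed.

Lemma sumR_ge0 (I : Type) (r : seq I) (P : pred I) (f : I -> R) :
  (forall i, P i -> 0 <= f i) -> 0 <= \big[Rplus/0]_(i <- r | P i) f i.
Proof.
move=> H; apply: (big_ind (fun a => 0 <= a)) => //; first lra.
by move=> ? ? ? ?; lra.
Qed.

Lemma sumR_sub (I : Type) (r : seq I) (P Q : pred I) (f : I -> R) :
  (forall i, Q i -> 0 <= f i) -> (forall i, P i -> Q i) ->
  \big[Rplus/0]_(i <- r | P i) f i <= \big[Rplus/0]_(i <- r | Q i) f i.
Proof.
move=> H0 HPQ; rewrite (big_mkcond P) (big_mkcond Q).
apply: sumR_le => i _; case: ifP => Pi; first by rewrite HPQ //; lra.
case: ifP => Qi; [exact: H0 | lra].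
Qed.

Lemma sumR_mulr (I : Type) (r : seq I) (P : pred I) (f : I -> R) a :
  \big[Rplus/0]_(i <- r | P i) f i * a = \big[Rplus/0]_(i <- r | P i) (f i * a).
Proof. by rewrite (big_distrl (times := Rmult)). Qed.

Lemma sumR_mull (I : Type) (r : seq I) (P : pred I) (f : I -> R) a :
  a * \big[Rplus/0]_(i <- r | P i) f i = \big[Rplus/0]_(i <- r | P i) (a * f i).
Proof. by rewrite (big_distrr (times := Rmult)). Qed.

Lemma sumR_split (I : Type) (r : seq I) (P : pred I) (f g : I -> R) :
  \big[Rplus/0]_(i <- r | P i) (f i + g i) =
  \big[Rplus/0]_(i <- r | P i) f i + \big[Rplus/0]_(i <- r | P i) g i.
Proof. by rewrite big_split. Qed.

Lemma lim_sumR (I : Type) (r : seq I) (P : pred I) (u : I -> nat -> R) (l : I -> R) :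
  (forall i, P i -> is_lim_seq (u i) (l i)) ->
  is_lim_seq (fun N => \big[Rplus/0]_(i <- r | P i) u i N)
             (\big[Rplus/0]_(i <- r | P i) l i).
Proof.
move=> H; elim: r => [|a r IH].
  by apply: (is_lim_seq_ext (fun=> 0)) => [N|]; rewrite ?big_nil //; exact: is_lim_seq_const.
rewrite big_cons; case: ifP => Pa.
  apply: (is_lim_seq_ext (fun N => u a N + \big[Rplus/0]_(i <- r | P i) u i N)).
    by move=> N; rewrite big_cons Pa.
  by apply: is_lim_seq_plus; [exact: H| exact: IH| done].
by apply: (is_lim_seq_ext _ _ _ _ IH) => N; rewrite big_cons Pa.
Qed.

Lemma sumR_opp (I : Type) (r : seq I) (P : pred I) (f : I -> R) :
  \big[Rplus/0]_(i <- r | P i) (- f i) = - \big[Rplus/0]_(i <- r | P i) f i.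
Proof.
have -> : \big[Rplus/0]_(i <- r | P i) (- f i) = \big[Rplus/0]_(i <- r | P i) ((-1) * f i).
  by apply: eq_bigr => i _; ring.
rewrite -sumR_mull; ring.
Qed.

Lemma sumR_minus (I : Type) (r : seq I) (P : pred I) (f g : I -> R) :
  \big[Rplus/0]_(i <- r | P i) (f i - g i) =
  \big[Rplus/0]_(i <- r | P i) f i - \big[Rplus/0]_(i <- r | P i) g i.
Proof. by rewrite /Rminus sumR_split sumR_opp. Qed.

Lemma sumR_IDT (T : finType) (a : pred T) (f : T -> R) :
  \big[Rplus/0]_(i : T) f i = \big[Rplus/0]_(i | a i) f i + \big[Rplus/0]_(i | ~~ a i) f i.
Proof. by rewrite (bigID a). Qed.


Lemma lim_inv_pos (u : nat -> R) (l : Rbar) :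
  (forall N, 0 < u N) -> is_lim_seq u l -> exists l', is_lim_seq (fun N => / u N) l'.
Proof.
move=> Hu Hl.
case: (Rbar_eq_dec l (Finite 0)) => [E0|Ne].
  exists p_infty; apply/is_lim_seq_spec => M.
  subst l; move/is_lim_seq_spec: Hl => Hl.
  have Heps : 0 < / (Rabs M + 1) by apply: Rinv_0_lt_compat; move: (Rabs_pos M); lra.
  case: (Hl (mkposreal _ Heps)) => N0 HN0; exists N0 => n Hn.
  move: (HN0 n Hn) => /=; rewrite Rminus_0_r Rabs_pos_eq; last by move: (Hu n); lra.
  move=> H1.
  have : / / (Rabs M + 1) < / u n.
    apply: Rinv_lt_contravar => //; apply: Rmult_lt_0_compat => //; exact: Hu.
  rewrite Rinv_inv; move: (Rle_abs M); lra.
by exists (Rbar_inv l); apply: is_lim_seq_inv.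
Qed.

Lemma nonneg_plus (x y : Rbar) : Rbar_le 0 x -> Rbar_le 0 y ->
  is_Rbar_plus x y (Rbar_plus x y) /\ Rbar_le 0 (Rbar_plus x y).
Proof.
case: x => [x||] //=; case: y => [y||] //= hx hy; split => //=; try lra.
Qed.

Lemma nonneg_mult (c : R) (y : Rbar) : 0 <= c -> Rbar_le 0 y -> Rbar_le 0 (Rbar_mult c y).
Proof.
move=> hc; case: y => [y||] //= hy.
  by apply: Rmult_le_pos.
rewrite /Rbar_mult /=. case: Rle_dec => H; try case: Rle_lt_or_eq_dec => H'; simpl; try lra.
Qed.

Lemma lim_nonneg (u : nat -> R) (l : Rbar) : (forall N, 0 <= u N) -> is_lim_seq u l -> Rbar_le 0 l.
Proof.
move=> H Hl; apply: (is_lim_seq_le (fun=> 0) u) => //; exact: is_lim_seq_const.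
Qed.

Lemma continuity_tan l : cos l <> 0 -> continuity_pt tan l.
Proof.
move=> H; rewrite /tan; apply: continuity_pt_div => //.
  exact: continuity_sin. exact: continuity_cos.
Qed.

Lemma ordered_lim (a c : nat -> R) :
  (forall N, 0 < a N) -> (forall N, 0 < c N) -> orderedPair a c ->
  exists l, is_lim_seq (fun N => a N / c N) l.
Proof.
move=> Ha Hc [l Hl].
have pos : forall N, 0 < a N / c N.
  by move=> N; apply: Rdiv_lt_0_compat.
have Hl' : is_lim_seq (fun N => atan (a N / c N)) l by apply/is_lim_seq_Reals.
have Hle : l <= PI / 2.
  have := is_lim_seq_le _ (fun=> PI/2) _ _ (fun N => Rlt_le _ _ (proj2 (atan_bound (a N / c N)))) Hl' (is_lim_seq_const _).
  by [].
have Hge : 0 <= l.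
  have := is_lim_seq_le (fun=> 0) _ _ _ _ (is_lim_seq_const _) Hl'.
  apply => N; rewrite -atan_0; apply: Rlt_le; apply: atan_increasing; exact: pos.
case: (Rle_lt_or_eq_dec _ _ Hle) => [Hlt|Heq].
  exists (tan l).
  apply: (is_lim_seq_ext (fun N => tan (atan (a N / c N)))).
    by move=> N; rewrite tan_atan.
  apply: is_lim_seq_continuous => //; apply: continuity_tan.
  apply: Rgt_not_eq; apply: cos_gt_0; move: PI_RGT_0; lra.
exists p_infty; apply/is_lim_seq_spec => M.
move/is_lim_seq_spec: Hl' => Hs.
have Heps : 0 < PI / 2 - atan M by move: (atan_bound M); lra.
case: (Hs (mkposreal _ Heps)) => N0 HN0; exists N0 => n Hn.
move: (HN0 n Hn) => /= H1.
case: (Rlt_le_dec M (a n / c n)) => // Hf.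
have : atan (a n / c n) <= atan M.
  case: (Rle_lt_or_eq_dec _ _ Hf) => [H2|->]; [apply: Rlt_le; exact: atan_increasing | lra].
move: H1; rewrite Heq; move/Rabs_def2 => [H1 H2]; lra.
Qed.

Section Rational.
Variable E : finType.
Variable Rs : nat -> E -> E -> R.
Variable B : {set E * E}.
Hypothesis hB : forall eta xi, (eta, xi) \in B <-> (eta <> xi /\ forall N, 0 < Rs N eta xi).
Hypothesis hAii : forall m : nat, (1 <= m)%nat -> forall k1 k2 : E * E -> nat,
  (\sum_(pr in B) k1 pr)%N = m -> (\sum_(pr in B) k2 pr)%N = m ->
  orderedPair (monomial Rs B k1) (monomial Rs B k2).

Definition degk (k : E * E -> nat) := (\sum_(pr in B) k pr)%N.
Definition mono k N := monomial Rs B k N.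

Lemma mono_pos k N : 0 < mono k N.
Proof.
rewrite /mono /monomial; apply: (big_ind (fun x => 0 < x)); first lra.
  by move=> x y; apply: Rmult_lt_0_compat.
case=> a b /= /hB [_ H]; apply: pow_lt; exact: H.
Qed.

Lemma mono_add k1 k2 N : mono (fun pr => (k1 pr + k2 pr)%N) N = mono k1 N * mono k2 N.
Proof.
rewrite /mono /monomial -big_split /=; apply: eq_bigr => pr _; exact: pow_add.
Qed.

Lemma degk_add k1 k2 : degk (fun pr => (k1 pr + k2 pr)%N) = (degk k1 + degk k2)%N.
Proof. by rewrite /degk big_split. Qed.

Lemma mono_deg0 k N : degk k = 0%N -> mono k N = 1.
Proof.
move=> /eqP; rewrite /degk sum_nat_eq0 => /forallP H.
rewrite /mono /monomial big1 // => pr Hpr.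
by move: (H pr); rewrite Hpr /= => /eqP ->.
Qed.

Lemma mono_lim d k1 k2 : degk k1 = d -> degk k2 = d ->
  exists l, is_lim_seq (fun N => mono k1 N / mono k2 N) l.
Proof.
case: d => [|d] H1 H2.
  exists 1; apply: (is_lim_seq_ext (fun=> 1)); last exact: is_lim_seq_const.
  by move=> N; rewrite !mono_deg0 //; field.
apply: ordered_lim; try exact: mono_pos.
exact: (hAii (m := d.+1)).
Qed.

Definition Poly := seq (R * (E * E -> nat)).
Definition evalP (P : Poly) N := \big[Rplus/0]_(t <- P) (t.1 * mono t.2 N).
Fixpoint PolyD (d : nat) (P : Poly) : Prop :=
  match P with
  | [::] => True
  | t :: P' => (0 <= t.1 /\ degk t.2 = d) /\ PolyD d P'
  end.

Definition mulP (P Q : Poly) : Poly :=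
  [seq (t.1 * s.1, fun pr => (t.2 pr + s.2 pr)%N) | t <- P, s <- Q].

Lemma evalP_cat P Q N : evalP (P ++ Q) N = evalP P N + evalP Q N.
Proof. by rewrite /evalP big_cat. Qed.

Lemma evalP_mul P Q N : evalP (mulP P Q) N = evalP P N * evalP Q N.
Proof.
rewrite /evalP /mulP big_allpairs_dep sumR_mulr; apply: eq_bigr => t _.
rewrite sumR_mull; apply: eq_bigr => s _ /=; rewrite mono_add; ring.
Qed.

Lemma PolyD_cat d P Q : PolyD d P -> PolyD d Q -> PolyD d (P ++ Q).
Proof. by elim: P => [|t P IH] //= [Ht HP] HQ; split => //; apply: IH. Qed.

Lemma PolyD_mul d1 d2 P Q : PolyD d1 P -> PolyD d2 Q -> PolyD (d1 + d2) (mulP P Q).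
Proof.
elim: P => [|t P IH] //= [[Ht1 Ht2] HP] HQ.
apply: PolyD_cat; last exact: IH.
clear IH HP; elim: Q HQ => [|s Q IHQ] //= [[Hs1 Hs2] HQ]; split; last exact: IHQ.
split; first exact: Rmult_le_pos.
by rewrite degk_add Ht2 Hs2.
Qed.

Lemma evalP_ge0 d P N : PolyD d P -> 0 <= evalP P N.
Proof.
elim: P => [|t P IH] /= ; first by rewrite /evalP big_nil; lra.
move=> [[Ht _] HP]; rewrite /evalP big_cons.
have := IH HP; rewrite /evalP => H.
have := mono_pos t.2 N => Hm.
have := Rmult_le_pos _ _ Ht (Rlt_le _ _ Hm); lra.
Qed.

Lemma polyt_lim d P (t : nat -> R) : PolyD d P -> (forall N, 0 < t N) ->
  (forall k, degk k = d -> exists l, is_lim_seq (fun N => mono k N / t N) l) ->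
  exists l, Rbar_le 0 l /\ is_lim_seq (fun N => evalP P N / t N) l.
Proof.
move=> HP Ht Hk; elim: P HP => [|a P IH] /=.
  move=> _; exists 0; split; first by simpl; lra.
  apply: (is_lim_seq_ext (fun=> 0)); last exact: is_lim_seq_const.
  by move=> N; rewrite /evalP big_nil /Rdiv Rmult_0_l.
move=> [[Ha1 Ha2] HP].
case: (IH HP) => l2 [Hl2 Hlim2].
case: (Hk _ Ha2) => l1 Hlim1.
have Hl1 : Rbar_le 0 l1.
  apply: (lim_nonneg _ Hlim1) => N; apply: Rlt_le; apply: Rdiv_lt_0_compat;
    [exact: mono_pos | exact: Ht].
have Hm := nonneg_mult Ha1 Hl1.
case: (nonneg_plus Hm Hl2) => Hp Hp'.
exists (Rbar_plus (Rbar_mult a.1 l1) l2); split => //.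
apply: (is_lim_seq_ext (fun N => a.1 * (mono a.2 N / t N) + evalP P N / t N)).
  move=> N; rewrite /evalP big_cons; field; apply: Rgt_not_eq; exact: Ht.
apply: is_lim_seq_plus; [apply: is_lim_seq_scal_l; exact: Hlim1 | exact: Hlim2 | exact: Hp].
Qed.

Lemma poly_ratio_lim d P Q : PolyD d P -> PolyD d Q ->
  (forall N, 0 < evalP P N) -> (forall N, 0 < evalP Q N) ->
  exists l, is_lim_seq (fun N => evalP P N / evalP Q N) l.
Proof.
move=> HP HQ HPp HQp.
have S1 : forall k, degk k = d -> exists l, is_lim_seq (fun N => evalP P N / mono k N) l.
  move=> k Hk; case: (polyt_lim HP (mono_pos k)) => [k' Hk'|l [_ Hl]].
    exact: mono_lim Hk' Hk.
  by exists l.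
have S2 : forall k, degk k = d -> exists l, is_lim_seq (fun N => mono k N / evalP P N) l.
  move=> k Hk; case: (S1 k Hk) => l Hl.
  have Hpos : forall N, 0 < evalP P N / mono k N.
    by move=> N; apply: Rdiv_lt_0_compat; [exact: HPp | exact: mono_pos].
  case: (lim_inv_pos Hpos Hl) => l' Hl'; exists l'.
  apply: (is_lim_seq_ext _ _ _ _ Hl') => N.
  have := mono_pos k N; have := HPp N => h1 h2; field; split; lra.
case: (polyt_lim HQ HPp S2) => l [_ Hl].
have Hpos : forall N, 0 < evalP Q N / evalP P N.
  by move=> N; apply: Rdiv_lt_0_compat; [exact: HQp | exact: HPp].
case: (lim_inv_pos Hpos Hl) => l' Hl'; exists l'.
apply: (is_lim_seq_ext _ _ _ _ Hl') => N.
have := HQp N; have := HPp N => h1 h2; field; split; lra.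
Qed.

Definition Rat (e : nat) (r : nat -> R) := exists m P Q,
  PolyD (m + e) P /\ PolyD m Q /\ (forall N, 0 < evalP Q N) /\
  forall N, r N = evalP P N / evalP Q N.

Definition k0 : E * E -> nat := fun _ => 0%N.

Lemma degk0 : degk k0 = 0%N.
Proof. by rewrite /degk big1. Qed.

Lemma evalP_one N : evalP [:: (1, k0)] N = 1.
Proof. by rewrite /evalP big_cons big_nil /= mono_deg0 ?degk0 //; ring. Qed.

Lemma Rat_zero e : Rat e (fun=> 0).
Proof.
exists 0%N, [::], [:: (1, k0)]; split => //; split.
  by split => //; split; [simpl; lra| exact: degk0].
split; first by move=> N; rewrite evalP_one; lra.
by move=> N; rewrite evalP_one /evalP big_nil /Rdiv Rmult_0_l.
Qed.

Lemma Rat_rate a b : (a, b) \in B -> Rat 1 (fun N => Rs N a b).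
Proof.
move=> Hab.
pose ind : E * E -> nat := fun pr => nat_of_bool (pr == (a, b)).
have Hd : degk ind = 1%N.
  rewrite /degk (bigD1 (a, b)) //= /ind eqxx big1 // => pr /andP [_ H].
  by rewrite (negbTE H).
have Hm : forall N, mono ind N = Rs N a b.
  move=> N; rewrite /mono /monomial (bigD1 (a, b)) //= /ind eqxx big1 /=.
    by ring.
  by move=> pr /andP [_ H]; rewrite (negbTE H).
exists 0%N, [:: (1, ind)], [:: (1, k0)]; split.
  by split => //; split; [simpl; lra | exact: Hd].
split; first by split => //; split; [simpl; lra| exact: degk0].
split; first by move=> N; rewrite evalP_one; lra.
move=> N; rewrite evalP_one /evalP big_cons big_nil /= Hm; field.
Qed.

Lemma Rat_add e r1 r2 : Rat e r1 -> Rat e r2 -> Rat e (fun N => r1 N + r2 N).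
Proof.
move=> [m1 [P1 [Q1 [HP1 [HQ1 [Hq1 H1]]]]]] [m2 [P2 [Q2 [HP2 [HQ2 [Hq2 H2]]]]]].
exists (m1 + m2)%N, (mulP P1 Q2 ++ mulP P2 Q1), (mulP Q1 Q2); split.
  apply: PolyD_cat.
    have -> : (m1 + m2 + e = m1 + e + m2)%N by lia.
    exact: PolyD_mul.
  have -> : (m1 + m2 + e = m2 + e + m1)%N by lia.
  exact: PolyD_mul.
split; first exact: PolyD_mul.
split; first by move=> N; rewrite evalP_mul; apply: Rmult_lt_0_compat.
move=> N; rewrite H1 H2 evalP_cat !evalP_mul.
have := Hq1 N; have := Hq2 N => h1 h2; field; split; lra.
Qed.

Lemma Rat_mul e1 e2 r1 r2 : Rat e1 r1 -> Rat e2 r2 -> Rat (e1 + e2) (fun N => r1 N * r2 N).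
Proof.
move=> [m1 [P1 [Q1 [HP1 [HQ1 [Hq1 H1]]]]]] [m2 [P2 [Q2 [HP2 [HQ2 [Hq2 H2]]]]]].
exists (m1 + m2)%N, (mulP P1 P2), (mulP Q1 Q2); split.
  have -> : (m1 + m2 + (e1 + e2) = m1 + e1 + (m2 + e2))%N by lia.
  exact: PolyD_mul.
split; first exact: PolyD_mul.
split; first by move=> N; rewrite evalP_mul; apply: Rmult_lt_0_compat.
move=> N; rewrite H1 H2 !evalP_mul.
have := Hq1 N; have := Hq2 N => h1 h2; field; split; lra.
Qed.

Lemma Rat_div e e2 r1 r2 : Rat (e + e2) r1 -> Rat e2 r2 -> (forall N, 0 < r2 N) ->
  Rat e (fun N => r1 N / r2 N).
Proof.
move=> [m1 [P1 [Q1 [HP1 [HQ1 [Hq1 H1]]]]]] [m2 [P2 [Q2 [HP2 [HQ2 [Hq2 H2]]]]]] Hr2.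
have Hp2 : forall N, 0 < evalP P2 N.
  move=> N; have := Hr2 N; rewrite H2 => h.
  have := Hq2 N => h'.
  have -> : evalP P2 N = evalP P2 N / evalP Q2 N * evalP Q2 N by field; lra.
  exact: Rmult_lt_0_compat.
exists (m1 + (m2 + e2))%N, (mulP P1 Q2), (mulP Q1 P2); split.
  have -> : (m1 + (m2 + e2) + e = m1 + (e + e2) + m2)%N by lia.
  exact: PolyD_mul.
split; first exact: PolyD_mul.
split; first by move=> N; rewrite evalP_mul; apply: Rmult_lt_0_compat.
move=> N; rewrite H1 H2 !evalP_mul.
have := Hq1 N; have := Hq2 N; have := Hp2 N => h0 h1 h2; field; split; lra.
Qed.

Lemma Rat_sum (I : Type) e (r : seq I) (P : pred I) (f : I -> nat -> R) :
  (forall i, P i -> Rat e (f i)) ->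
  Rat e (fun N => \big[Rplus/0]_(i <- r | P i) f i N).
Proof.
move=> H; elim: r => [|a r IH].
  have := Rat_zero e; move=> [m [P1 [Q1 [h1 [h2 [h3 h4]]]]]].
  by exists m, P1, Q1; split => //; split => //; split => // N; rewrite big_nil -h4.
case Pa: (P a).
  have := Rat_add (H a Pa) IH; move=> [m [P1 [Q1 [h1 [h2 [h3 h4]]]]]].
  by exists m, P1, Q1; split => //; split => //; split => // N; rewrite big_cons Pa -h4.
move: IH => [m [P1 [Q1 [h1 [h2 [h3 h4]]]]]].
by exists m, P1, Q1; split => //; split => //; split => // N; rewrite big_cons Pa -h4.
Qed.

Lemma Rat0_lim r : Rat 0 r -> (forall N, 0 < r N) -> exists l, is_lim_seq r l.
Proof.
move=> [m [P [Q [HP [HQ [Hq Hr]]]]]] Hpos.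
rewrite addn0 in HP.
have Hp : forall N, 0 < evalP P N.
  move=> N; have := Hpos N; rewrite Hr => h.
  have := Hq N => h'.
  have -> : evalP P N = evalP P N / evalP Q N * evalP Q N by field; lra.
  exact: Rmult_lt_0_compat.
case: (poly_ratio_lim HP HQ Hp Hq) => l Hl; exists l.
by apply: (is_lim_seq_ext _ _ _ _ Hl) => N; rewrite Hr.
Qed.

End Rational.


Lemma crt_first (T : Type) (Rl : T -> T -> Prop) a b :
  clos_refl_trans T Rl a b -> a <> b -> exists v, Rl a v.
Proof.
move=> H Hab; have H1 := clos_rt_rt1n _ _ _ _ H.
inversion H1; subst; [by [] | by eexists; eauto].
Qed.

Section Elim.
Variable E : finType.

Definition holdS (S : {set E}) (Rt : E -> E -> R) z := \big[Rplus/0]_(b in S | b != z) Rt z b.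
Definition elimR (S : {set E}) z (Rt : E -> E -> R) a b :=
  Rt a b + Rt a z * Rt z b / holdS S Rt z.
Definition edgeS (S : {set E}) (Rt : E -> E -> R) u v :=
  u \in S /\ v \in S /\ u <> v /\ 0 < Rt u v.
Definition nonnegS (S : {set E}) (Rt : E -> E -> R) :=
  forall a b, a \in S -> b \in S -> a <> b -> 0 <= Rt a b.
Definition irrS (S : {set E}) (Rt : E -> E -> R) :=
  forall a b, a \in S -> b \in S -> clos_refl_trans E (edgeS S Rt) a b.
Definition invS (S : {set E}) (Rt : E -> E -> R) (m0 : E -> R) :=
  forall xi, xi \in S ->
    \big[Rplus/0]_(eta in S | eta != xi) (m0 eta * Rt eta xi) = m0 xi * holdS S Rt xi.

Lemma sum_S_D1 (S : {set E}) z xi (f : E -> R) : z \in S -> z != xi ->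
  \big[Rplus/0]_(eta in S | eta != xi) f eta =
  f z + \big[Rplus/0]_(eta | [&& eta \in S, eta != xi & eta != z]) f eta.
Proof.
move=> Hz Hne; rewrite (bigD1 z) /=; last by rewrite Hz Hne.
congr (_ + _); apply: eq_bigl => x; by rewrite andbA.
Qed.

Lemma sum_SD1 (S : {set E}) z xi (f : E -> R) :
  \big[Rplus/0]_(eta in S :\ z | eta != xi) f eta =
  \big[Rplus/0]_(eta | [&& eta \in S, eta != xi & eta != z]) f eta.
Proof.
apply: eq_bigl => x; rewrite in_setD1.
by case: (x \in S); case: (x != z); case: (x != xi).
Qed.

Lemma sum_swap2 (S : {set E}) z xi (f : E -> R) :
  \big[Rplus/0]_(eta | [&& eta \in S, eta != xi & eta != z]) f eta =
  \big[Rplus/0]_(eta | [&& eta \in S, eta != z & eta != xi]) f eta.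
Proof.
apply: eq_bigl => x.
by case: (x \in S); case: (x != z); case: (x != xi).
Qed.

Lemma hold_pos S Rt z w : nonnegS S Rt -> irrS S Rt -> z \in S -> w \in S -> w != z ->
  0 < holdS S Rt z.
Proof.
move=> Hn Hi Hz Hw Hwz.
have [v [_ [Hv [Hzv Hpos]]]] : exists v, edgeS S Rt z v.
  apply: (crt_first (Hi z w Hz Hw)) => Hzw; by rewrite Hzw eqxx in Hwz.
rewrite /holdS (bigD1 v) /=; last by rewrite Hv; apply/eqP => H; apply: Hzv.
have : 0 <= \big[Rplus/0]_(i | (i \in S) && (i != z) && (i != v)) Rt z i.
  apply: sumR_ge0 => i /andP [/andP [Hi1 Hi2] _]; apply: Hn => //.
  by move=> H; rewrite H eqxx in Hi2.
lra.
Qed.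

Lemma elim_nonneg S Rt z : nonnegS S Rt -> z \in S -> 0 < holdS S Rt z ->
  nonnegS (S :\ z) (elimR S z Rt).
Proof.
move=> Hn Hz Hl a b; rewrite !in_setD1 => /andP [/eqP Haz Ha] /andP [/eqP Hbz Hb] Hab.
rewrite /elimR.
have h1 := Hn a b Ha Hb Hab.
have h2 : 0 <= Rt a z * Rt z b / holdS S Rt z.
  apply: Rmult_le_pos; last by apply: Rlt_le; apply: Rinv_0_lt_compat.
  apply: Rmult_le_pos; first exact: (Hn a z Ha Hz Haz).
  by apply: (Hn z b Hz Hb) => H; apply: Hbz.
lra.
Qed.

Lemma elim_irr S Rt z : nonnegS S Rt -> irrS S Rt -> z \in S -> 0 < holdS S Rt z ->
  irrS (S :\ z) (elimR S z Rt).
Proof.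
move=> Hn Hi Hz Hl.
have claim : forall u v, clos_refl_trans_1n E (edgeS S Rt) u v -> v \in S :\ z ->
  (u \in S :\ z -> clos_refl_trans E (edgeS (S :\ z) (elimR S z Rt)) u v) /\
  (u = z -> forall a, a \in S :\ z -> 0 < Rt a z ->
      clos_refl_trans E (edgeS (S :\ z) (elimR S z Rt)) a v).
  move=> u v H; elim: H => [x|x y w Hxy Hyw IH] Hv.
    split; first by move=> _; apply: rt_refl.
    by move=> Hx; move: Hv; rewrite Hx in_setD1 eqxx.
  move: Hxy => [Hx [Hy [Hxy Hpos]]].
  have [IH1 IH2] := IH Hv.
  split.
    move=> Hx'.
    case: (eqVneq y z) => [Eyz|Nyz].
      apply: (IH2 Eyz x Hx'); by rewrite -Eyz.
    have Hy' : y \in S :\ z by rewrite in_setD1 Nyz Hy.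
    apply: rt_trans (IH1 Hy'); apply: rt_step.
    split => //; split => //; split => //.
    move: Hx'; rewrite in_setD1 => /andP [/eqP Hxz _].
    rewrite /elimR.
    have : 0 <= Rt x z * Rt z y / holdS S Rt z.
      apply: Rmult_le_pos; last by apply: Rlt_le; apply: Rinv_0_lt_compat.
      apply: Rmult_le_pos; first exact: (Hn x z Hx Hz Hxz).
      by apply: (Hn z y Hz Hy) => H; rewrite H eqxx in Nyz.
    lra.
  move=> Exz a Ha Haz.
  have Nyz : y != z by apply/eqP => H; apply: Hxy; rewrite H Exz.
  have Hy' : y \in S :\ z by rewrite in_setD1 Nyz Hy.
  case: (eqVneq a y) => [Eay|Nay].
    by rewrite Eay; apply: IH1.
  apply: rt_trans (IH1 Hy'); apply: rt_step.
  split => //; split => //; split; first by apply/eqP.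
  move: Ha; rewrite in_setD1 => /andP [/eqP Haz' Ha].
  rewrite /elimR.
  have h1 : 0 <= Rt a y by apply: Hn => //; apply/eqP.
  have h2 : 0 < Rt a z * Rt z y / holdS S Rt z.
    apply: Rmult_lt_0_compat; last by apply: Rinv_0_lt_compat.
    apply: Rmult_lt_0_compat => //; by rewrite -Exz.
  lra.
move=> a b Ha Hb.
have Ha0 : a \in S by move: Ha; rewrite in_setD1 => /andP [].
have Hb0 : b \in S by move: Hb; rewrite in_setD1 => /andP [].
have H := clos_rt_rt1n _ _ _ _ (Hi a b Ha0 Hb0).
by apply: (proj1 (claim a b H Hb)).
Qed.

Lemma elim_inv S Rt z (m0 : E -> R) : invS S Rt m0 -> z \in S -> 0 < holdS S Rt z ->
  invS (S :\ z) (elimR S z Rt) m0.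
Proof.
move=> Hinv Hz Hl xi Hxi.
have Hxz : xi != z by move: Hxi; rewrite in_setD1 => /andP [].
have HxS : xi \in S by move: Hxi; rewrite in_setD1 => /andP [].
have Hzx : z != xi by rewrite eq_sym.
have I1 := Hinv xi HxS; have I2 := Hinv z Hz.
set l := holdS S Rt z in Hl I2 *.
set A1 := \big[Rplus/0]_(i | [&& i \in S, i != xi & i != z]) (m0 i * Rt i xi).
set A2 := \big[Rplus/0]_(i | [&& i \in S, i != xi & i != z]) (m0 i * Rt i z).
set A3 := \big[Rplus/0]_(i | [&& i \in S, i != xi & i != z]) Rt xi i.
set A4 := \big[Rplus/0]_(i | [&& i \in S, i != xi & i != z]) Rt z i.
have E1 : m0 z * Rt z xi + A1 = m0 xi * (Rt xi z + A3).
  by move: I1; rewrite /holdS !(sum_S_D1 _ Hz Hzx) => h; exact: h.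
have E2 : m0 xi * Rt xi z + A2 = m0 z * l.
  by move: I2; rewrite /l /holdS !(sum_S_D1 _ HxS Hxz) -sum_swap2 => h; exact: h.
have E4 : l = Rt z xi + A4.
  by rewrite /l /holdS (sum_S_D1 _ HxS Hxz) -sum_swap2.
have L1 : \big[Rplus/0]_(eta in S :\ z | eta != xi) (m0 eta * elimR S z Rt eta xi) =
  A1 + Rt z xi / l * A2.
  rewrite sum_SD1 /elimR -/l.
  under eq_bigr do rewrite Rmult_plus_distr_l.
  rewrite sumR_split sumR_mull; congr (_ + _); apply: eq_bigr => i _; field; lra.
have L2 : holdS (S :\ z) (elimR S z Rt) xi = A3 + Rt xi z / l * A4.
  rewrite /holdS sum_SD1 /elimR -/l.
  rewrite sumR_split sumR_mull; congr (_ + _); apply: eq_bigr => i _; field; lra.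
rewrite L1 L2.
have -> : A1 = m0 xi * (Rt xi z + A3) - m0 z * Rt z xi by lra.
have -> : A2 = m0 z * l - m0 xi * Rt xi z by lra.
have -> : A4 = l - Rt z xi by lra.
field; lra.
Qed.

End Elim.


Lemma mu_pos (E : finType) (Rt : E -> E -> R) (m0 : E -> R) :
  (forall a b, a <> b -> 0 <= Rt a b) -> irreducible Rt -> invariantProb Rt m0 ->
  forall eta, 0 < m0 eta.
Proof.
move=> Hnn Hirr [Hge [Hsum Hinv]] eta.
have step : forall a b, clos_refl_trans E (fun a b => a <> b /\ 0 < Rt a b) a b ->
    0 < m0 a -> 0 < m0 b.
  move=> a b H; elim: H => [x y [Hxy Hp] Hx|x|x y w _ IH1 _ IH2] //; last by auto.
  have := Hinv y; rewrite (bigD1 x) /=; last by apply/eqP.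
  have : 0 <= \big[Rplus/0]_(i | (i != y) && (i != x)) (m0 i * Rt i y).
    apply: sumR_ge0 => i /andP [/eqP Hi _]; apply: Rmult_le_pos => //; exact: Hnn.
  move=> H1 H2.
  have H3 : 0 < m0 y * holding Rt y.
    have := Rmult_lt_0_compat _ _ Hx Hp; lra.
  case: (Rle_lt_or_eq_dec _ _ (Hge y)) => // H4.
  by rewrite -H4 Rmult_0_l in H3; lra.
case: (classic (exists a, 0 < m0 a)) => [[a Ha]|Hno].
  exact: (step a eta (Hirr a eta) Ha).
exfalso.
have : \big[Rplus/0]_(e : E) m0 e <= \big[Rplus/0]_(e : E) 0.
  apply: sumR_le => i _; apply: Rnot_lt_le => H; apply: Hno; by exists i.
rewrite Hsum big1 //; lra.
Qed.

Section Ratio.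
Variable E : finType.
Variable Rs : nat -> E -> E -> R.
Variable B : {set E * E}.
Variable mu : nat -> E -> R.
Hypothesis hB : forall eta xi, (eta, xi) \in B <-> (eta <> xi /\ forall N, 0 < Rs N eta xi).
Hypothesis hAii : forall m : nat, (1 <= m)%nat -> forall k1 k2 : E * E -> nat,
  (\sum_(pr in B) k1 pr)%N = m -> (\sum_(pr in B) k2 pr)%N = m ->
  orderedPair (monomial Rs B k1) (monomial Rs B k2).
Hypothesis hAi : forall eta xi : E, eta <> xi ->
     (forall N, Rs N eta xi = 0) \/ (forall N, 0 < Rs N eta xi).
Hypothesis hirr : forall N, irreducible (Rs N).
Hypothesis hmu : forall N, invariantProb (Rs N) (mu N).

Lemma Rat_ext e (r1 r2 : nat -> R) : Rat Rs B e r1 -> (forall N, r1 N = r2 N) -> Rat Rs B e r2.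
Proof.
move=> [m [P [Q [h1 [h2 [h3 h4]]]]]] H.
by exists m, P, Q; split => //; split => //; split => // N; rewrite -H.
Qed.

Lemma hnn N a b : a <> b -> 0 <= Rs N a b.
Proof. by move=> H; case: (hAi H) => h; [rewrite h; lra | apply: Rlt_le]. Qed.

Lemma mupos N eta : 0 < mu N eta.
Proof. apply: (mu_pos (Rt := Rs N)) => //; exact: hnn. Qed.

Fixpoint elimL (zs : seq E) (S : {set E}) (Rt : E -> E -> R) : E -> E -> R :=
  match zs with
  | [::] => Rt
  | z :: zs' => elimL zs' (S :\ z) (elimR S z Rt)
  end.

Fixpoint elimSet (zs : seq E) (S : {set E}) : {set E} :=
  match zs with
  | [::] => S
  | z :: zs' => elimSet zs' (S :\ z)
  end.

Lemma elimSet_mem zs S x : (x \in elimSet zs S) = (x \in S) && (x \notin zs).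
Proof.
elim: zs S => [|z zs IH] S /=; first by rewrite andbT.
rewrite IH in_setD1 in_cons negb_or.
by case: (x == z); case: (x \in S); case: (x \in zs).
Qed.

Definition Inv (S : {set E}) (Rseq : nat -> E -> E -> R) :=
  (forall N, nonnegS S (Rseq N) /\ irrS S (Rseq N) /\ invS S (Rseq N) (mu N)) /\
  (forall a b, a \in S -> b \in S -> a <> b -> Rat Rs B 1 (fun N => Rseq N a b)).

Lemma Inv_step (S : {set E}) (Rseq : nat -> E -> E -> R) z w : z \in S -> w \in S -> w != z -> Inv S Rseq ->
  Inv (S :\ z) (fun N => elimR S z (Rseq N)).
Proof.
move=> Hz Hw Hwz [H1 H2].
have Hl : forall N, 0 < holdS S (Rseq N) z.
  move=> N; have [h1 [h2 _]] := H1 N; exact: (hold_pos h1 h2 Hz Hw Hwz).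
split.
  move=> N; have [h1 [h2 h3]] := H1 N; split; first exact: elim_nonneg.
  split; [exact: elim_irr | exact: elim_inv].
move=> a b; rewrite !in_setD1 => /andP [/eqP Haz Ha] /andP [/eqP Hbz Hb] Hab.
rewrite /elimR.
apply: Rat_add; first exact: H2.
have Hlam : Rat Rs B 1 (fun N => holdS S (Rseq N) z).
  rewrite /holdS; apply: (@Rat_sum _ _ _ _ _ _ _ (fun i N => Rseq N z i)) => i /andP [Hi Hiz].
  apply: H2 => // H; by rewrite H eqxx in Hiz.
apply: (Rat_div (e2 := 1%N)) => //.
apply: (Rat_mul (e1 := 1%N) (e2 := 1%N)); apply: H2 => //.
by move=> H; apply: Hbz.
Qed.

Lemma Inv_elimL zs (S : {set E}) (Rseq : nat -> E -> E -> R) eta : uniq zs -> {subset zs <= S} ->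
  eta \in S -> eta \notin zs -> Inv S Rseq ->
  Inv (elimSet zs S) (fun N => elimL zs S (Rseq N)).
Proof.
elim: zs S Rseq => [|z zs IH] S Rseq //= /andP [Hz Hu] Hsub He Hez HI.
rewrite in_cons negb_or in Hez; move/andP: Hez => [Hez1 Hez2].
apply: (IH (S :\ z) (fun N => elimR S z (Rseq N))) => //.
- move=> x Hx; rewrite in_setD1 (Hsub x) ?andbT; last by rewrite in_cons Hx orbT.
  by apply/eqP => Exz; rewrite -Exz Hx in Hz.
- by rewrite in_setD1 Hez1 He.
apply: (Inv_step (w := eta)) => //; apply: Hsub; exact: mem_head.
Qed.

Lemma Inv_init : Inv setT Rs.
Proof.
split.
  move=> N; split; first by move=> a b _ _ H; exact: hnn.
  split.
    move=> a b _ _; have := hirr N a b; elim => [x y [H1 H2]|x|x y w _ IH1 _ IH2].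
    - by apply: rt_step; split; rewrite ?in_setT.
    - exact: rt_refl.
    - exact: rt_trans IH1 IH2.
  move=> xi _; have [_ [_ Hi]] := hmu N.
  rewrite (eq_bigl (fun eta => eta != xi)); last by move=> x; rewrite in_setT.
  rewrite Hi /holdS /holding.
  by congr (_ * _); apply: eq_bigl => x; rewrite in_setT.
move=> a b _ _ Hab.
case: (hAi Hab) => H.
  apply: (Rat_ext (Rat_zero Rs B 1%N)) => N; by rewrite H.
apply: Rat_rate; apply/hB; split => //.
Qed.

Lemma ratio_lim eta xi : eta <> xi ->
  exists l, is_lim_seq (fun N => mu N eta / mu N xi) l.
Proof.
move=> Hne.
set zs := enum [set x | (x != eta) && (x != xi)].
have Hez : eta \notin zs by rewrite /zs mem_enum inE eqxx.
have HI := Inv_elimL (Rseq := Rs) (enum_uniq _) (fun x _ => in_setT x) (in_setT eta) Hez Inv_init.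
set T := elimSet zs setT in HI.
set Rf := fun N => elimL zs setT (Rs N) in HI.
have memT : forall x, (x \in T) = (x == eta) || (x == xi).
  move=> x; rewrite /T elimSet_mem in_setT /zs mem_enum inE /=.
  by case: (x == eta); case: (x == xi).
have HeT : eta \in T by rewrite memT eqxx.
have HxT : xi \in T by rewrite memT eqxx orbT.
have Hne' : eta != xi by apply/eqP.
have sumT : forall (a b : E) (f : E -> R), a \in T -> b \in T -> a != b ->
    \big[Rplus/0]_(c in T | c != b) f c = f a.
  move=> a b f Ha Hb Hab; rewrite (bigD1 a) /=; last by rewrite Ha Hab.
  rewrite big1 ?Rplus_0_r // => c /andP [/andP [Hc Hcb] Hca].
  move: Ha Hb Hc Hab Hcb Hca; rewrite !memT.
  by case/orP=> /eqP ->; case/orP=> /eqP ->; case/orP => /eqP ->; rewrite ?eqxx.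
have [HIN HIR] := HI.
have pos : forall N a b, a \in T -> b \in T -> a != b -> 0 < Rf N a b.
  move=> N a b Ha Hb Hab.
  have [_ [Hirr _]] := HIN N.
  have Hab' : a <> b by apply/eqP.
  have [v [_ [Hv [Hav Hp]]]] := crt_first (Hirr a b Ha Hb) Hab'.
  have -> : b = v.
    move: Ha Hb Hv Hab Hav; rewrite !memT.
    by case/orP=> /eqP ->; case/orP=> /eqP ->; case/orP => /eqP -> //; rewrite ?eqxx.
  exact: Hp.
have bal : forall N, mu N eta * Rf N eta xi = mu N xi * Rf N xi eta.
  move=> N; have [_ [_ Hinv]] := HIN N.
  have := Hinv xi HxT; rewrite (sumT eta xi) // /holdS (sumT eta xi) //.
have Hr : Rat Rs B 0 (fun N => Rf N xi eta / Rf N eta xi).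
  apply: (Rat_div (e2 := 1%N)); [apply: HIR => // H; apply: Hne; by rewrite H
                                | apply: HIR => //
                                | move=> N; apply: pos => //; by rewrite eq_sym].
case: (Rat0_lim hB hAii Hr) => [N|l Hl].
  apply: Rdiv_lt_0_compat; apply: pos => //; by rewrite eq_sym.
exists l; apply: (is_lim_seq_ext _ _ _ _ Hl) => N.
have h1 := mupos N xi; have h2 := pos N eta xi HeT HxT Hne'.
have := bal N => hb.
have -> : mu N eta = mu N xi * Rf N xi eta / Rf N eta xi by rewrite -hb; field; lra.
field; lra.
Qed.
End Ratio.


Lemma seqlim_cv (u : nat -> R) l : Un_cv u l -> seqlim u = l.
Proof.
move=> H; rewrite /seqlim.
have := epsilon_spec (inhabits 0) (fun l => Un_cv u l) (ex_intro _ l H).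
move=> H'; exact: UL_sequence H' H.
Qed.

Lemma seq_max (T : eqType) (a : T -> R) (x0 : T) (s : seq T) :
  exists x, x \in x0 :: s /\ forall y, y \in x0 :: s -> a y <= a x.
Proof.
elim: s => [|y s [x [Hx IH]]].
  exists x0; split; first exact: mem_head.
  by move=> y; rewrite inE => /eqP ->; lra.
case: (Rle_lt_dec (a y) (a x)) => H.
  exists x; split; first by move: Hx; rewrite !inE => /orP [->|->] //; rewrite !orbT.
  move=> z; rewrite !inE => /orP [/eqP ->|/orP [/eqP ->|Hz]] //.
  - by apply: IH; exact: mem_head.
  - by apply: IH; rewrite inE Hz orbT.
exists y; split; first by rewrite !inE eqxx orbT.
move=> z; rewrite !inE => /orP [/eqP ->|/orP [/eqP ->|Hz]]; try lra.
- have := IH x0 (mem_head _ _); lra.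
- have := IH z; rewrite inE Hz orbT => h; have := h is_true_true; lra.
Qed.

Lemma fin_max (T : finType) (a : T -> R) (x0 : T) : exists x, forall y, a y <= a x.
Proof.
have [x [_ Hx]] := seq_max a x0 (enum T).
by exists x => y; apply: Hx; rewrite inE mem_enum orbT.
Qed.

Lemma sum0_each (T : finType) (f : T -> R) j :
  (forall i, 0 <= f i) -> \big[Rplus/0]_(i : T) f i = 0 -> f j = 0.
Proof.
move=> H0 H; move: H; rewrite (bigD1 j) //=.
have : 0 <= \big[Rplus/0]_(i | i != j) f i by apply: sumR_ge0.
have := H0 j; lra.
Qed.

Section Trace.
Variable E : finType.
Variable Rt : E -> E -> R.
Variable m0 : E -> R.
Hypothesis hnn : forall a b, a <> b -> 0 <= Rt a b.
Hypothesis hirr : irreducible Rt.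
Hypothesis hinv : invariantProb Rt m0.
Hypothesis htwo : exists a b : E, a <> b.

Lemma holding_pos eta : 0 < holding Rt eta.
Proof.
have [w Hw] : exists w, w <> eta.
  case: htwo => a [b Hab]; case: (eqVneq a eta) => [E1|H].
    by subst a; exists b => H; apply: Hab.
  by exists a; apply/eqP.
have [v [Hv Hp]] := crt_first (hirr eta w) (fun H => Hw (esym H)).
rewrite /holding (bigD1 v) /=; last by apply/eqP => H; apply: Hv.
have : 0 <= \big[Rplus/0]_(i | (i != eta) && (i != v)) Rt eta i.
  apply: sumR_ge0 => i /andP [/eqP Hi _]; apply: hnn => H; apply: Hi.
  by rewrite H.
lra.
Qed.

Lemma jump_ge0 a b : 0 <= jumpP Rt a b.
Proof.
rewrite /jumpP; case: eqP => [_|H]; first lra.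
apply: Rmult_le_pos; first exact: hnn.
by apply: Rlt_le; apply: Rinv_0_lt_compat; exact: holding_pos.
Qed.

Lemma jump_sum a : \big[Rplus/0]_(b : E) jumpP Rt a b = 1.
Proof.
rewrite (bigD1 a) //= /jumpP eqxx Rplus_0_l.
have -> : \big[Rplus/0]_(i | i != a) (if a == i then 0 else Rt a i / holding Rt a) =
          \big[Rplus/0]_(i | i != a) (Rt a i / holding Rt a).
  apply: eq_bigr => i Hi; by rewrite eq_sym (negbTE Hi).
rewrite -sumR_mulr -/(holding Rt a); have := holding_pos a => h; field; lra.
Qed.

Lemma nu_stat z' : \big[Rplus/0]_(z : E) (m0 z * holding Rt z * jumpP Rt z z') =
  m0 z' * holding Rt z'.
Proof.
have [_ [_ Hi]] := hinv; rewrite -Hi.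
rewrite (bigD1 z') //= /jumpP eqxx Rmult_0_r Rplus_0_l.
apply: eq_bigr => i Hi'; rewrite (negbTE Hi').
have := holding_pos i => h; field; lra.
Qed.

Definition g (S T : {set E}) k (z' : E) :=
  if z' \in S then (if z' \in T then 1 else 0) else firstHitUpTo Rt S T k z'.

Lemma fh_succ S T k z : firstHitUpTo Rt S T k.+1 z =
  \big[Rplus/0]_(z' : E) (jumpP Rt z z' * g S T k z').
Proof. by []. Qed.

Lemma fh_ge0 S T k z : 0 <= firstHitUpTo Rt S T k z.
Proof.
elim: k z => [|k IH] z /=; first lra.
apply: sumR_ge0 => z' _; apply: Rmult_le_pos; first exact: jump_ge0.
case: ifP => _; [case: ifP => _; lra | exact: IH].
Qed.

Lemma fh_le1 S T k z : firstHitUpTo Rt S T k z <= 1.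
Proof.
elim: k z => [|k IH] z /=; first lra.
apply: (Rle_trans _ (\big[Rplus/0]_(z' : E) jumpP Rt z z')); last by rewrite jump_sum; lra.
apply: sumR_le => z' _.
have := jump_ge0 z z' => h.
have : (if z' \in S then if z' \in T then 1 else 0 else firstHitUpTo Rt S T k z') <= 1.
  case: ifP => _; [case: ifP => _; lra | exact: IH].
move=> h2; have := Rmult_le_compat_l _ _ _ h h2; lra.
Qed.

Lemma fh_mono S T k z : firstHitUpTo Rt S T k z <= firstHitUpTo Rt S T k.+1 z.
Proof.
elim: k z => [|k IH] z; first exact: fh_ge0.
rewrite fh_succ (fh_succ _ _ k.+1); apply: sumR_le => z' _.
apply: Rmult_le_compat_l; first exact: jump_ge0.
rewrite /g; case: ifP => _; [lra | exact: IH].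
Qed.

Lemma fh_cv S T z : Un_cv (fun k => firstHitUpTo Rt S T k z) (firstHit Rt S T z).
Proof.
have Hub : has_ub (fun k => firstHitUpTo Rt S T k z).
  exists 1 => x [n ->]; exact: fh_le1.
have [l Hl] := growing_cv (fun k => firstHitUpTo Rt S T k z) (fun n => fh_mono S T n z) Hub.
by rewrite /firstHit (seqlim_cv Hl).
Qed.

Lemma fh_lim S T z : is_lim_seq (fun k => firstHitUpTo Rt S T k z) (firstHit Rt S T z).
Proof. by apply/is_lim_seq_Reals; exact: fh_cv. Qed.

Lemma fh_lin S T k z : firstHitUpTo Rt S T k z =
  \big[Rplus/0]_(xi in T) firstHitUpTo Rt S [set xi] k z.
Proof.
elim: k z => [|k IH] z /=; first by rewrite big1.
rewrite (exchange_big (Rplus : Monoid.com_law 0)).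
apply: eq_bigr => z' _; rewrite -sumR_mull; congr (_ * _).
case: ifP => Hs; last exact: IH.
under eq_bigr do rewrite in_set1.
case: ifP => Ht.
  rewrite (bigD1 z') //= eqxx big1 ?Rplus_0_r // => i /andP [_ Hi].
  by rewrite eq_sym (negbTE Hi).
rewrite big1 // => i Hi; case: eqP => // E1; by rewrite E1 Hi in Ht.
Qed.

Lemma fhit_lin S T z : firstHit Rt S T z =
  \big[Rplus/0]_(xi in T) firstHit Rt S [set xi] z.
Proof.
have H1 := @fh_lim S T z.
have H2 := @lim_sumR E (index_enum E) (fun xi => (xi \in T)) (fun xi k => firstHitUpTo Rt S [set xi] k z)
  (fun xi => firstHit Rt S [set xi] z) (fun xi _ => @fh_lim S [set xi] z).
have H3 : is_lim_seq (fun k => firstHitUpTo Rt S T k z)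
  (\big[Rplus/0]_(xi in T) firstHit Rt S [set xi] z).
  by apply: (is_lim_seq_ext _ _ _ _ H2) => k; rewrite fh_lin.
have := is_lim_seq_unique _ _ H1; rewrite (is_lim_seq_unique _ _ H3).
by case.
Qed.

Lemma fhit_ge0 S T z : 0 <= firstHit Rt S T z.
Proof.
have := is_lim_seq_le (fun=> 0) _ _ _ (fun k => fh_ge0 S T k z) (is_lim_seq_const 0) (@fh_lim S T z).
by [].
Qed.

Lemma fhit_le1 S T z : firstHit Rt S T z <= 1.
Proof.
have := is_lim_seq_le _ (fun=> 1) _ _ (fun k => fh_le1 S T k z) (@fh_lim S T z) (is_lim_seq_const 1).
by [].
Qed.

Lemma fhit_eq S T z : firstHit Rt S T z =
  \big[Rplus/0]_(z' : E) (jumpP Rt z z' *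
     (if z' \in S then (if z' \in T then 1 else 0) else firstHit Rt S T z')).
Proof.
have H1 : is_lim_seq (fun k => firstHitUpTo Rt S T k.+1 z) (firstHit Rt S T z).
  by apply/(is_lim_seq_incr_1 (fun k => firstHitUpTo Rt S T k z)); exact: fh_lim.
have H2 := @lim_sumR E (index_enum E) xpredT
  (fun z' k => jumpP Rt z z' * g S T k z')
  (fun z' => jumpP Rt z z' *
     (if z' \in S then (if z' \in T then 1 else 0) else firstHit Rt S T z')).
have H3 : is_lim_seq (fun k => firstHitUpTo Rt S T k.+1 z)
  (\big[Rplus/0]_(z' : E) (jumpP Rt z z' *
     (if z' \in S then (if z' \in T then 1 else 0) else firstHit Rt S T z'))).
  apply: (is_lim_seq_ext _ _ _ _ (H2 _)) => [k|z' _]; first by rewrite fh_succ.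
  have -> : Finite (jumpP Rt z z' *
     (if z' \in S then (if z' \in T then 1 else 0) else firstHit Rt S T z')) =
     Rbar_mult (jumpP Rt z z') (if z' \in S then (if z' \in T then 1 else 0) else firstHit Rt S T z') by [].
  apply: is_lim_seq_scal_l; rewrite /g; case: (z' \in S).
    exact: is_lim_seq_const.
  exact: fh_lim.
have := is_lim_seq_unique _ _ H1; rewrite (is_lim_seq_unique _ _ H3); by case.
Qed.

Lemma recurrent S : S != set0 -> forall z, firstHit Rt S S z = 1.
Proof.
move=> HS.
pose a z := 1 - firstHit Rt S S z.
have a_ge0 : forall z, 0 <= a z by move=> z; have := fhit_le1 S S z; rewrite /a; lra.
pose h z' := if z' \in S then 0 else a z'.
have a_eq : forall z, a z = \big[Rplus/0]_(z' : E) (jumpP Rt z z' * h z').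
  move=> z; rewrite /a fhit_eq -{1}(jump_sum z) -sumR_minus.
  apply: eq_bigr => z' _; rewrite /h /a; case: (z' \in S); ring.
have [x0 _] := htwo.
have [zs Hzs] := fin_max a x0.
set M := a zs in Hzs.
suff : M <= 0.
  move=> HM z; have := Hzs z; have := a_ge0 z; rewrite /a; lra.
apply: Rnot_lt_le => HM.
have edge : forall u w, a u = M -> u <> w -> 0 < Rt u w -> a w = M /\ w \notin S.
  move=> u w Hu Huw Hp.
  have Hsum : \big[Rplus/0]_(z' : E) (jumpP Rt u z' * (M - h z')) = 0.
    under eq_bigr => z' _ do rewrite Rmult_minus_distr_l.
    by rewrite sumR_minus -a_eq -sumR_mulr jump_sum Hu; ring.
  have hle : forall z', h z' <= M.
    by move=> z'; rewrite /h; case: ifP => _; [lra | exact: Hzs].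
  have := sum0_each w (fun i => Rmult_le_pos _ _ (jump_ge0 u i) (Rge_le _ _ (Rge_minus _ _ (Rle_ge _ _ (hle i))))) Hsum.
  have Hj : 0 < jumpP Rt u w.
    rewrite /jumpP; case: eqP => // _; apply: Rdiv_lt_0_compat => //; exact: holding_pos.
  move=> H0.
  have Hh : h w = M.
    case: (Rmult_integral _ _ H0) => H; lra.
  move: Hh; rewrite /h; case: ifP => HwS Hh; first lra.
  by split.
have claim : forall u v, clos_refl_trans_1n E (fun a b => a <> b /\ 0 < Rt a b) u v ->
    a u = M -> a v = M /\ (u <> v -> v \notin S).
  move=> u v H; elim: H => [x|x y w [Hxy Hp] _ IH] Hx; first by split.
  have [Hy HyS] := edge x y Hx Hxy Hp.
  have [IH1 IH2] := IH Hy; split => // _.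
  case: (eqVneq y w) => [Eyw|Nyw]; first by rewrite -Eyw.
  by apply: IH2; apply/eqP.
have [w Hw] : exists w, w <> zs.
  case: htwo => p [q Hpq]; case: (eqVneq p zs) => [E1|H].
    by subst p; exists q => H; apply: Hpq.
  by exists p; apply/eqP.
have [v [Hv Hp]] := crt_first (hirr zs w) (fun H => Hw (esym H)).
have [Hav HvS] := edge zs v erefl Hv Hp.
have [s Hs] : exists s, s \in S by apply/set0Pn.
have [_ H] := claim v s (clos_rt_rt1n _ _ _ _ (hirr v s)) Hav.
have Hvs : v <> s by move=> E1; rewrite E1 Hs in HvS.
by move: (H Hvs); rewrite Hs.
Qed.

Definition nu z := m0 z * holding Rt z.

Lemma nu_ge0 z : 0 <= nu z.
Proof.
have [Hge _] := hinv; apply: Rmult_le_pos => //; apply: Rlt_le; exact: holding_pos.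
Qed.

Lemma stat_k (S A : {set E}) k : A \subset S ->
  \big[Rplus/0]_(z in S) (nu z * firstHitUpTo Rt S A k z) <= \big[Rplus/0]_(z in A) nu z.
Proof.
move=> HAS; case: k => [|k].
  rewrite /= big1; last by move=> i _; ring.
  by apply: sumR_ge0 => i _; exact: nu_ge0.
have tot : \big[Rplus/0]_(z : E) (nu z * firstHitUpTo Rt S A k.+1 z) =
    \big[Rplus/0]_(z' : E) (nu z' * g S A k z').
  under eq_bigr => z _ do rewrite fh_succ sumR_mull.
  rewrite (exchange_big (Rplus : Monoid.com_law 0)) /=.
  apply: eq_bigr => z' _.
  rewrite /nu -nu_stat sumR_mulr; apply: eq_bigr => z _; ring.
have split1 := sumR_IDT (fun z => z \in S) (fun z => nu z * firstHitUpTo Rt S A k.+1 z).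
have split2 := sumR_IDT (fun z => z \in S) (fun z => nu z * g S A k z).
have e1 : \big[Rplus/0]_(i | i \in S) (nu i * g S A k i) = \big[Rplus/0]_(z in A) nu z.
  rewrite (bigID (fun z => z \in A)) /=.
  rewrite [X in _ + X]big1; last first.
    by move=> i /andP [Hi HiA]; rewrite /g Hi (negbTE HiA); ring.
  rewrite Rplus_0_r; apply: eq_big => [i|i /andP [Hi HiA]]; last by rewrite /g Hi HiA; ring.
  case HiA: (i \in A); rewrite ?andbT ?andbF //.
  by rewrite (subsetP HAS i HiA).
have e2 : \big[Rplus/0]_(i | ~~ (i \in S)) (nu i * g S A k i) =
    \big[Rplus/0]_(i | ~~ (i \in S)) (nu i * firstHitUpTo Rt S A k i).
  by apply: eq_bigr => i Hi; rewrite /g (negbTE Hi).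
have e3 : \big[Rplus/0]_(i | ~~ (i \in S)) (nu i * firstHitUpTo Rt S A k i) <=
    \big[Rplus/0]_(i | ~~ (i \in S)) (nu i * firstHitUpTo Rt S A k.+1 i).
  apply: sumR_le => i _; apply: Rmult_le_compat_l; [exact: nu_ge0 | exact: fh_mono].
move: tot; rewrite split1 split2 e1 e2.
lra.
Qed.

Lemma stat_lim (S A : {set E}) : A \subset S ->
  \big[Rplus/0]_(z in S) (nu z * firstHit Rt S A z) <= \big[Rplus/0]_(z in A) nu z.
Proof.
move=> HAS.
have H := @lim_sumR E (index_enum E) (fun z => z \in S)
  (fun z k => nu z * firstHitUpTo Rt S A k z) (fun z => nu z * firstHit Rt S A z).
have H' : is_lim_seq (fun k => \big[Rplus/0]_(z in S) (nu z * firstHitUpTo Rt S A k z))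
   (\big[Rplus/0]_(z in S) (nu z * firstHit Rt S A z)).
  apply: H => z _.
  have -> : Finite (nu z * firstHit Rt S A z) = Rbar_mult (nu z) (firstHit Rt S A z) by [].
  apply: is_lim_seq_scal_l; exact: fh_lim.
have := is_lim_seq_le _ (fun=> \big[Rplus/0]_(z in A) nu z) _ _ (fun k => stat_k k HAS) H' (is_lim_seq_const _).
by [].
Qed.

Lemma flow_ineq (S A : {set E}) : S != set0 -> A \subset S ->
  \big[Rplus/0]_(eta in S :\: A) (nu eta * firstHit Rt S A eta) <=
  \big[Rplus/0]_(eta in A) (nu eta * firstHit Rt S (S :\: A) eta).
Proof.
move=> HS HAS.
have HSA : S :&: A = A by apply/setIidPr.
have one : forall eta, firstHit Rt S A eta + firstHit Rt S (S :\: A) eta = 1.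
  move=> eta; rewrite -(recurrent HS eta) (fhit_lin S S) (fhit_lin S A) (fhit_lin S (S :\: A)).
  by rewrite [X in _ = X](big_setID A) HSA.
have := stat_lim HAS; rewrite (big_setID A) /= HSA.
have -> : \big[Rplus/0]_(i in A) (nu i * firstHit Rt S (S :\: A) i) =
  \big[Rplus/0]_(i in A) nu i - \big[Rplus/0]_(i in A) (nu i * firstHit Rt S A i).
  have -> : \big[Rplus/0]_(i in A) nu i - \big[Rplus/0]_(i in A) (nu i * firstHit Rt S A i) =
    \big[Rplus/0]_(i in A) nu i + (-1) * \big[Rplus/0]_(i in A) (nu i * firstHit Rt S A i) by ring.
  rewrite sumR_mull -big_split /=; apply: eq_bigr => i _.
  have := one i; move=> h; have -> : firstHit Rt S (S :\: A) i = 1 - firstHit Rt S A i by lra.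
  ring.
lra.
Qed.

End Trace.


Lemma union_bound (T I : finType) (f : T -> R) (U : {set T}) (J : pred I) (Us : I -> {set T}) :
  (forall eta, 0 <= f eta) -> (forall eta, eta \in U -> exists i, J i /\ eta \in Us i) ->
  \big[Rplus/0]_(eta in U) f eta <= \big[Rplus/0]_(i | J i) \big[Rplus/0]_(eta in Us i) f eta.
Proof.
move=> H0 Hc.
have -> : \big[Rplus/0]_(i | J i) \big[Rplus/0]_(eta in Us i) f eta =
  \big[Rplus/0]_(eta : T) \big[Rplus/0]_(i | J i) (if eta \in Us i then f eta else 0).
  rewrite (exchange_big (Rplus : Monoid.com_law 0)) /=.
  by apply: eq_bigr => i _; rewrite big_mkcond.
rewrite big_mkcond; apply: sumR_le => eta _.
case: ifP => HU.
  have [i [Ji Hi]] := Hc eta HU.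
  rewrite (bigD1 i) //= Hi.
  have : 0 <= \big[Rplus/0]_(j | J j && (j != i)) (if eta \in Us j then f eta else 0).
    by apply: sumR_ge0 => j _; case: ifP => _; [exact: H0 | lra].
  lra.
by apply: sumR_ge0 => j _; case: ifP => _; [exact: H0 | lra].
Qed.

Section Block.
Variable E : finType.
Variable Rt : E -> E -> R.
Variable m0 : E -> R.
Hypothesis hnn : forall a b, a <> b -> 0 <= Rt a b.
Hypothesis hirr : irreducible Rt.
Hypothesis hinv : invariantProb Rt m0.
Hypothesis htwo : exists a b : E, a <> b.
Hypothesis hpos : forall eta, 0 < m0 eta.
Variable p : nat.
Variable F : 'I_p -> {set E}.
Hypothesis hdisj : forall x y, x != y -> [disjoint F x & F y].

Definition G := unionF F.
Definition W (U V : {set E}) := \big[Rplus/0]_(eta in U) (nu Rt m0 eta * firstHit Rt G V eta).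

Lemma inG eta : (eta \in G) = [exists x, eta \in F x].
Proof.
apply/bigcupP/existsP => [[x _ H]|[x H]]; by exists x.
Qed.

Lemma fhit_monoV (V Vp : {set E}) eta : V \subset Vp -> firstHit Rt G V eta <= firstHit Rt G Vp eta.
Proof.
move=> HV; rewrite (fhit_lin hnn hirr htwo G V) (fhit_lin hnn hirr htwo G Vp).
apply: sumR_sub => [i _|i Hi]; first exact: (fhit_ge0 hnn hirr htwo).
exact: (subsetP HV).
Qed.

Lemma fhit_union (V : {set E}) (J : pred 'I_p) eta : (forall xi, xi \in V -> exists i, J i /\ xi \in F i) ->
  firstHit Rt G V eta <= \big[Rplus/0]_(i | J i) firstHit Rt G (F i) eta.
Proof.
move=> HV; rewrite (fhit_lin hnn hirr htwo G).
have := @union_bound E 'I_p (fun xi => firstHit Rt G [set xi] eta) V J F (fun xi => fhit_ge0 hnn hirr htwo G _ eta) HV.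
move=> H; apply: (Rle_trans _ _ _ H); right; apply: eq_bigr => i _.
by rewrite (fhit_lin hnn hirr htwo G (F i)).
Qed.

Lemma nu_nonneg eta : 0 <= nu Rt m0 eta.
Proof. exact: (nu_ge0 hnn hirr hinv htwo). Qed.

Lemma W_monoU (U Up V : {set E}) : U \subset Up -> W U V <= W Up V.
Proof.
move=> HU; apply: sumR_sub => [i _|i Hi]; last exact: (subsetP HU).
apply: Rmult_le_pos; [exact: nu_nonneg | exact: (fhit_ge0 hnn hirr htwo)].
Qed.

Lemma muS_pos (U : {set E}) : U != set0 -> 0 < muS m0 U.
Proof.
move=> /set0Pn [x Hx]; rewrite /muS (bigD1 x) //=.
have : 0 <= \big[Rplus/0]_(i in U | i != x) m0 i.
  by apply: sumR_ge0 => i _; apply: Rlt_le.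
have := hpos x; lra.
Qed.

Lemma tsr_eq u v : F u != set0 ->
  muS m0 (F u) * traceSetRate Rt m0 G (F u) (F v) = W (F u) (F v).
Proof.
move=> Hne; have := muS_pos Hne => Hm.
rewrite /traceSetRate -Rmult_assoc Rinv_r ?Rmult_1_l; last lra.
apply: eq_bigr => eta _; rewrite /traceRate -sumR_mull.
rewrite (fhit_lin hnn hirr htwo G (F v)) /nu; ring.
Qed.

Lemma block_flow (m : {set 'I_p}) a b : G != set0 -> a \notin m -> b \in m ->
  W (F a) (F b) <= \big[Rplus/0]_(x in m) \big[Rplus/0]_(y | y \notin m) W (F x) (F y).
Proof.
move=> HG Ha Hb.
set A := \bigcup_(x in m) F x.
have HAG : A \subset G.
  apply/subsetP => eta /bigcupP [x _ H]; rewrite inG; apply/existsP; by exists x.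
have S1 : W (F a) (F b) <= W (F a) A.
  apply: sumR_le => eta _; apply: Rmult_le_compat_l; first exact: nu_nonneg.
  apply: fhit_monoV; apply/subsetP => x Hx; apply/bigcupP; by exists b.
have S2 : W (F a) A <= W (G :\: A) A.
  apply: W_monoU; apply/subsetP => eta Heta; rewrite in_setD; apply/andP; split.
    apply/bigcupP => [[x Hx Hex]].
    have Hax : a != x by apply/eqP => E1; rewrite E1 Hx in Ha.
    by rewrite (disjointFr (hdisj Hax) Heta) in Hex.
  by rewrite inG; apply/existsP; exists a.
have S3 : W (G :\: A) A <= W A (G :\: A).
  exact: (flow_ineq hnn hirr hinv htwo HG HAG).
have S4 : W A (G :\: A) <= \big[Rplus/0]_(x in m) W (F x) (G :\: A).
  apply: union_bound => [eta|eta /bigcupP [x Hx H]]; last by exists x.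
  apply: Rmult_le_pos; [exact: nu_nonneg | exact: (fhit_ge0 hnn hirr htwo)].
have S5 : forall x, W (F x) (G :\: A) <= \big[Rplus/0]_(y | y \notin m) W (F x) (F y).
  move=> x; rewrite /W (exchange_big (Rplus : Monoid.com_law 0)) /=.
  under [X in _ <= X]eq_bigr => eta _ do rewrite -sumR_mull.
  apply: sumR_le => eta _; apply: Rmult_le_compat_l; first exact: nu_nonneg.
  apply: fhit_union => xi; rewrite in_setD inG => /andP [HxA /existsP [y Hy]].
  exists y; split => //; apply/negP => Hym; move/negP: HxA; apply; apply/bigcupP.
  by exists y.
have S6 : \big[Rplus/0]_(x in m) W (F x) (G :\: A) <=
    \big[Rplus/0]_(x in m) \big[Rplus/0]_(y | y \notin m) W (F x) (F y).
  by apply: sumR_le => x _; exact: S5.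
lra.
Qed.

End Block.


Lemma inv0_pinfty (u : nat -> R) :
  (forall N, 0 < u N) -> is_lim_seq u 0 -> is_lim_seq (fun N => / u N) p_infty.
Proof.
move=> Hu Hl; apply/is_lim_seq_spec => M.
move/is_lim_seq_spec: Hl => Hl.
have Heps : 0 < / (Rabs M + 1) by apply: Rinv_0_lt_compat; move: (Rabs_pos M); lra.
case: (Hl (mkposreal _ Heps)) => N0 HN0; exists N0 => n Hn.
move: (HN0 n Hn) => /=; rewrite Rminus_0_r Rabs_pos_eq; last by move: (Hu n); lra.
move=> H1.
have : / / (Rabs M + 1) < / u n.
  apply: Rinv_lt_contravar => //; apply: Rmult_lt_0_compat => //; exact: Hu.
rewrite Rinv_inv; move: (Rle_abs M); lra.
Qed.

Definition isFin (l : Rbar) := if l is p_infty then false else true.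

Section Main.
Variable p : nat.
Variable rat : 'I_p -> 'I_p -> nat -> R.
Hypothesis rat_pos : forall x y N, 0 < rat x y N.
Hypothesis rat_xx : forall x N, rat x x N = 1.
Hypothesis rat_inv : forall x y N, rat y x N = / rat x y N.
Hypothesis rat_mul : forall x y z N, rat x z N = rat x y N * rat y z N.
Hypothesis rat_ex : forall x y, exists l, is_lim_seq (rat x y) l.

Definition L x y := Lim_seq (rat x y).

Lemma HL x y : is_lim_seq (rat x y) (L x y).
Proof. apply: Lim_seq_correct; exact: rat_ex. Qed.

Lemma Lxx x : L x x = 1.
Proof.
apply: is_lim_seq_unique; apply: (is_lim_seq_ext (fun=> 1)); last exact: is_lim_seq_const.
by move=> N; rewrite rat_xx.
Qed.

Lemma Lge0 x y : Rbar_le 0 (L x y).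
Proof. have := @lim_nonneg (rat x y) (L x y); apply; last exact: HL. move=> N; apply: Rlt_le; exact: rat_pos. Qed.

Lemma Lfin x y : isFin (L x y) -> exists a, L x y = Finite a /\ 0 <= a.
Proof.
have := Lge0 x y; case: (L x y) => [a||] //= H _; by exists a.
Qed.

Lemma L0inf x y : L x y = 0 -> L y x = p_infty.
Proof.
move=> H; apply: is_lim_seq_unique.
apply: (is_lim_seq_ext (fun N => / rat x y N)); first by move=> N; rewrite (rat_inv x y).
apply: inv0_pinfty; first exact: rat_pos.
rewrite -H; exact: HL.
Qed.

Lemma Linf0 x y : L x y = p_infty -> L y x = 0.
Proof.
move=> H; apply: is_lim_seq_unique.
apply: (is_lim_seq_ext (fun N => / rat x y N)); first by move=> N; rewrite (rat_inv x y).
have := is_lim_seq_inv _ _ (@HL x y); rewrite H /=; apply => //.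
Qed.

Lemma Lmul0 x y z : isFin (L x y) -> L y z = 0 -> L x z = 0.
Proof.
move=> Hf H; have [a [Ha _]] := Lfin Hf.
apply: is_lim_seq_unique.
apply: (is_lim_seq_ext (fun N => rat x y N * rat y z N)); first by move=> N; rewrite -rat_mul.
have -> : Finite 0 = Finite (a * 0) by rewrite Rmult_0_r.
apply: is_lim_seq_mult'; [rewrite -Ha | rewrite -H]; exact: HL.
Qed.

Lemma Lmul0' x y z : L x y = 0 -> isFin (L y z) -> L x z = 0.
Proof.
move=> H Hf; have [a [Ha _]] := Lfin Hf.
apply: is_lim_seq_unique.
apply: (is_lim_seq_ext (fun N => rat x y N * rat y z N)); first by move=> N; rewrite -rat_mul.
have -> : Finite 0 = Finite (0 * a) by rewrite Rmult_0_l.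
apply: is_lim_seq_mult'; [rewrite -H | rewrite -Ha]; exact: HL.
Qed.

Lemma exists_min (s : seq 'I_p) : s != [::] ->
  exists x, x \in s /\ forall y, y \in s -> isFin (L x y).
Proof.
elim: s => [//|a s IH] _.
case: (eqVneq s [::]) => [Es|Ns].
  exists a; split; first exact: mem_head.
  by move=> y; rewrite Es inE => /eqP ->; rewrite Lxx.
have [x' [Hx' Hf]] := IH Ns.
case Hxa: (isFin (L x' a)).
  exists x'; split; first by rewrite inE Hx' orbT.
  by move=> y; rewrite inE => /orP [/eqP ->|Hy] //; exact: Hf.
have Hinf : L x' a = p_infty by move: Hxa; case: (L x' a).
have H0 := Linf0 Hinf.
exists a; split; first exact: mem_head.
move=> y; rewrite inE => /orP [/eqP ->|Hy]; first by rewrite Lxx.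
by rewrite (Lmul0' H0 (Hf y Hy)).
Qed.

End Main.


Theorem mainTheorem18
  (E : finType) (Rs : nat -> E -> E -> R) (mu : nat -> E -> R) (B : {set E * E})
  (p : nat) (F : 'I_p -> {set E}) (D : {set E})
  (bm b : nat -> R) (rF : 'I_p -> 'I_p -> R) (C : {set 'I_p})
  (hirr : forall N, irreducible (Rs N))
  (hmu : forall N, invariantProb (Rs N) (mu N))
  (hA : assumptionA Rs B)
  (hp : (2 <= p)%N)
  (hpart : isPartition F D)
  (hbm : forall N, (0 < bm N)) (hb : forall N, (0 < b N))
  (hratio : Un_cv (fun N => (bm N / b N)) 0)
  (hH0 : H0 mu F)
  (hH1 : H1 Rs mu F b rF)
  (hH2 : H2 Rs mu F bm)
  (hH3 : H3 Rs D b)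
  (hC : commClass rF C) :
  forall eta xi : E,
    eta \in \bigcup_(x in C) F x -> xi \in \bigcup_(x in C) F x -> eta != xi ->
    exists m : R, (0 < m) /\ Un_cv (fun N => (mu N eta / mu N xi)) m.
Proof.
move=> eta xi Heta Hxi Hne.
have [hAi [hB hAii]] := hA.
have [hFne [hdisj [_ _]]] := hpart.
have lt0 : (0 < p)%N by apply: leq_trans hp.
pose o0 : 'I_p := Ordinal lt0.
pose o1 : 'I_p := Ordinal hp.
have htwo : exists a b : E, a <> b.
  have /set0Pn [a Ha] := hFne o0.
  have /set0Pn [c Hc] := hFne o1.
  exists a, c => Eac.
  have Hne01 : o0 != o1 by [].
  by rewrite -Eac (disjointFr (hdisj _ _ Hne01) Ha) in Hc.
have hnn : forall N a c, a <> c -> 0 <= Rs N a c.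
  by move=> N a c H; case: (hAi a c H) => h; [rewrite h; lra | apply: Rlt_le].
have hpos : forall N e, 0 < mu N e := mupos hAi hirr hmu.
have muSpos : forall N x, 0 < muS (mu N) (F x).
  move=> N x; exact: (muS_pos (hpos N) (hFne x)).
pose rat x y N := muS (mu N) (F x) / muS (mu N) (F y).
have rat_pos : forall x y N, 0 < rat x y N.
  by move=> x y N; apply: Rdiv_lt_0_compat.
have rat_xx : forall x N, rat x x N = 1.
  by move=> x N; rewrite /rat; field; have := muSpos N x; lra.
have rat_inv : forall x y N, rat y x N = / rat x y N.
  by move=> x y N; rewrite /rat; field; have := muSpos N x; have := muSpos N y; lra.
have rat_mul : forall x y z N, rat x z N = rat x y N * rat y z N.
  by move=> x y z N; rewrite /rat; field; have := muSpos N z; have := muSpos N y; lra.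
have rat_ex : forall x y, exists l, is_lim_seq (rat x y) l.
  move=> x y.
  have /set0Pn [ex Hex] := hFne x; have /set0Pn [ey Hey] := hFne y.
  have [lx [[Hlx0 Hlx1] Hlx]] := hH0 x ex Hex.
  have [ly [[Hly0 Hly1] Hly]] := hH0 y ey Hey.
  case: (eqVneq ex ey) => [Exy|Nxy].
    case: (eqVneq x y) => [Exy'|Nxy'].
      exists 1; apply: (is_lim_seq_ext (fun=> 1)); last exact: is_lim_seq_const.
      by move=> N; rewrite Exy' rat_xx.
    by rewrite Exy (disjointFl (hdisj _ _ Nxy') Hey) in Hex.
  have Nxy' : ex <> ey by apply/eqP.
  have [L0 HL0] := ratio_lim hB hAii hAi hirr hmu Nxy'.
  move/is_lim_seq_Reals: Hlx => Hlx; move/is_lim_seq_Reals: Hly => Hly.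
  have Hix := is_lim_seq_inv _ _ Hlx.
  have Hc : is_lim_seq (fun N => / (mu N ex / muS (mu N) (F x)) * (mu N ey / muS (mu N) (F y)))
      (/ lx * ly).
    apply: is_lim_seq_mult' => //; apply: Hix => H; case: H; lra.
  have Hcpos : / lx * ly <> 0.
    apply: Rgt_not_eq; apply: Rmult_lt_0_compat => //; exact: Rinv_0_lt_compat.
  exists (Rbar_mult L0 (/ lx * ly)).
  apply: (is_lim_seq_ext (fun N => mu N ex / mu N ey *
     (/ (mu N ex / muS (mu N) (F x)) * (mu N ey / muS (mu N) (F y))))).
    move=> N; rewrite /rat; have := hpos N ex; have := hpos N ey;
      have := muSpos N x; have := muSpos N y => h1 h2 h3 h4; field; lra.
  apply: (is_lim_seq_mult _ _ _ _ _ HL0 Hc).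
  apply: Rbar_mult_correct; by case: L0 {HL0}.
pose LL := L rat.
have HLL : forall x y, is_lim_seq (rat x y) (LL x y) := fun x y => @HL p rat rat_ex x y.
have LLinf0 := Linf0 rat_inv rat_ex.
have LLmul0 := Lmul0 rat_pos rat_mul rat_ex.
have LL0inf := L0inf rat_pos rat_inv rat_ex.
have LLfin := Lfin rat_pos rat_ex.
have LLmin := exists_min rat_pos rat_xx rat_inv rat_mul rat_ex.
have [xc Hxc] := hC.
have HG : G F != set0.
  have /set0Pn [a Ha] := hFne o0.
  apply/set0Pn; exists a; apply/bigcupP; by exists o0.
have finC : forall x y, x \in C -> y \in C -> isFin (LL x y).
  move=> x1 y1 Hx1 Hy1; apply/negPn/negP => Hinf.
  pose m := [set x in C | [forall (y | y \in C), isFin (LL x y)]].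
  have Hne0 : enum C != [::].
    apply/eqP => H; have := mem_enum C x1; rewrite H Hx1 in_nil; by [].
  have [xm [Hxm Hxmf]] := LLmin (enum C) Hne0.
  rewrite mem_enum in Hxm.
  have Hxm_m : xm \in m.
    rewrite inE Hxm /=; apply/forall_inP => y Hy; apply: Hxmf; by rewrite mem_enum.
  have Hx1_m : x1 \notin m.
    rewrite inE Hx1 /=; apply/negP => /forall_inP H; move: Hinf; by rewrite H.
  have edge : exists a c, [/\ a \in C, a \notin m, c \in m, a <> c & 0 < rF a c].
    have Hr : reachP rF x1 xm.
      apply: rt_trans (proj2 (proj1 (Hxc x1) Hx1)) (proj1 (proj1 (Hxc xm) Hxm)).
    have Hr1 := clos_rt_rt1n _ _ _ _ Hr.
    have claim : forall u v, clos_refl_trans_1n 'I_p (fun x y => x <> y /\ 0 < rF x y) u v ->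
        v = xm -> u \in C -> u \notin m ->
        exists a c, [/\ a \in C, a \notin m, c \in m, a <> c & 0 < rF a c].
      move=> u v H; elim: H => [u0|u0 w v0 [Huw Hp] Hwv IH] Hv HuC Hum.
        by rewrite Hv Hxm_m in Hum.
      case Hwm: (w \in m).
        by exists u0, w; split.
      apply: IH => //; last by rewrite Hwm.
      apply/(proj2 (Hxc w)); split.
        apply: rt_trans (proj1 (proj1 (Hxc u0) HuC)) (rt_step _ _ _ _ _); by split.
      apply: rt_trans (clos_rt1n_rt _ _ _ _ Hwv) _; rewrite Hv.
      exact: (proj2 (proj1 (Hxc xm) Hxm)).
    exact: (claim _ _ Hr1 erefl Hx1 Hx1_m).
  have [a [c [HaC Ham Hcm Hac Hrac]]] := edge.
  have zero : forall x', x' \in m -> LL x' a = 0.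
    move=> x' Hx'.
    move: Ham; rewrite inE HaC /= => /forall_inPn [y Hy Hnf].
    have Hay : LL a y = p_infty by move: Hnf; rewrite /isFin; case: (LL a y).
    apply: (LLmul0 _ y) (LLinf0 _ _ Hay).
    by move: Hx'; rewrite inE => /andP [_ /forall_inP]; apply.
  pose TSR N u v := traceSetRate (Rs N) (mu N) (unionF F) (F u) (F v).
  have ineq : forall N, b N * TSR N a c <=
     \big[Rplus/0]_(x' in m) (rat x' a N * \big[Rplus/0]_(y' | y' \notin m) (b N * TSR N x' y')).
    move=> N.
    have Hbf := block_flow (hnn N) (hirr N) (hmu N) htwo hdisj HG Ham Hcm.
    have Htsr : forall u v, W (Rs N) (mu N) F (F u) (F v) = muS (mu N) (F u) * TSR N u v.
      move=> u v; symmetry; exact: (tsr_eq (hnn N) (hirr N) htwo (hpos N) v (hFne u)).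
    have E1 : \big[Rplus/0]_(x in m) \big[Rplus/0]_(y | y \notin m) W (Rs N) (mu N) F (F x) (F y) =
      \big[Rplus/0]_(x in m) \big[Rplus/0]_(y | y \notin m) (muS (mu N) (F x) * TSR N x y).
      by apply: eq_bigr => x' _; apply: eq_bigr => y' _; exact: Htsr.
    rewrite Htsr E1 in Hbf.
    have Ma := muSpos N a; have Hbn := hb N.
    have E2 : \big[Rplus/0]_(x' in m) (rat x' a N * \big[Rplus/0]_(y' | y' \notin m) (b N * TSR N x' y')) =
      b N / muS (mu N) (F a) * \big[Rplus/0]_(x in m) \big[Rplus/0]_(y | y \notin m) (muS (mu N) (F x) * TSR N x y).
      rewrite sumR_mull; apply: eq_bigr => x' _; rewrite !sumR_mull; apply: eq_bigr => y' _.
      rewrite /rat; field; lra.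
    rewrite E2.
    have -> : b N * TSR N a c = b N / muS (mu N) (F a) * (muS (mu N) (F a) * TSR N a c) by field; lra.
    apply: Rmult_le_compat_l => //; apply: Rlt_le; apply: Rdiv_lt_0_compat => //.
  have Hac' : a != c by apply/eqP.
  have Hl1 : is_lim_seq (fun N => b N * TSR N a c) (rF a c).
    by apply/is_lim_seq_Reals; exact: (proj2 ((proj1 hH1) a c Hac')).
  have Hl2 := @lim_sumR 'I_p (index_enum _) (fun x' => x' \in m)
     (fun x' N => rat x' a N * \big[Rplus/0]_(y' | y' \notin m) (b N * TSR N x' y'))
     (fun x' => 0 * \big[Rplus/0]_(y' | y' \notin m) rF x' y').
  have Hz : \big[Rplus/0]_(x' in m) (0 * \big[Rplus/0]_(y' | y' \notin m) rF x' y') = 0.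
    by rewrite big1 // => x' _; ring.
  suff Hl3 : is_lim_seq (fun N => \big[Rplus/0]_(x' in m)
     (rat x' a N * \big[Rplus/0]_(y' | y' \notin m) (b N * TSR N x' y')))
     (\big[Rplus/0]_(x' in m) (0 * \big[Rplus/0]_(y' | y' \notin m) rF x' y')).
    have := is_lim_seq_le _ _ _ _ ineq Hl1 Hl3; rewrite Hz /= => H; lra.
  apply: Hl2 => x' Hx'; apply: is_lim_seq_mult'.
    rewrite -(zero x' Hx'); exact: HLL.
  have := @lim_sumR 'I_p (index_enum _) (fun y' => y' \notin m)
     (fun y' N => b N * TSR N x' y') (fun y' => rF x' y'); apply => y' Hy'.
  apply/is_lim_seq_Reals; apply: (proj2 ((proj1 hH1) x' y' _)).
  by apply/eqP => E3; rewrite -E3 Hx' in Hy'.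
move: Heta Hxi => /bigcupP [x Hx Hex] /bigcupP [y Hy Hey].
have Fxy := finC x y Hx Hy; have Fyx := finC y x Hy Hx.
have [a0 [Ha0 Ha0ge]] := LLfin x y Fxy.
have Ha0pos : 0 < a0.
  case: (Rle_lt_or_eq_dec _ _ Ha0ge) => // E0.
  have : LL x y = 0 by rewrite /LL Ha0 -E0.
  by move/LL0inf => H; rewrite /LL H in Fyx.
have [l1 [[Hl10 _] Hl1]] := hH0 x eta Hex.
have [l2 [[Hl20 _] Hl2]] := hH0 y xi Hey.
exists (l1 * a0 * / l2); split.
  apply: Rmult_lt_0_compat; [exact: Rmult_lt_0_compat | exact: Rinv_0_lt_compat].
apply/is_lim_seq_Reals.
apply: (is_lim_seq_ext (fun N => mu N eta / muS (mu N) (F x) * rat x y N * / (mu N xi / muS (mu N) (F y)))).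
  move=> N; rewrite /rat; have := hpos N eta; have := hpos N xi;
    have := muSpos N x; have := muSpos N y => h1 h2 h3 h4; field; lra.
apply: is_lim_seq_mult'; first apply: is_lim_seq_mult'.
- by apply/is_lim_seq_Reals; exact: Hl1.
- rewrite -Ha0; exact: HLL.
have := is_lim_seq_inv _ _ (proj2 (is_lim_seq_Reals _ _) Hl2); apply.
by case; lra.
Qed.
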